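(* Every Hamiltonian surface in the Brady complex $X$ contains every triangle of $X$.
   Context: The Brady complex $X$ is the simply connected CAT(0) piecewise Euclidean 2-complex (constructed by T. Brady) on which $\mathrm{Aut}(F_2)$ acts properly and cocompactly by cellular isometries. Its closed 2-cells (faces) are unit equilateral triangles and unit lozenges (rhombi with angles $\pi/3$ and $2\pi/3$); every edge of $X$ lies in exactly three faces: one triangle and two lozenges. A Hamiltonian surface in $X$ is a connected union $\Sigma$ of closed faces of $X$ which is a surface without boundary, contains every vertex and every edge of $X$, and has no multiple vertex (at every vertex the faces of $\Sigma$ containing it form a single disk). *)

(* Defs.v *)
(* A combinatorial model of the Brady complex X.  Notation: B_4 is given by the
   Birman-Ko-Lee (dual) presentation on the six atoms a_ts (4 >= t > s >= 1),
   with Garside element delta = a43 a32 a21.  *)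
From Stdlib Require Import List ZArith.
Import ListNotations.

Inductive atom : Type := a21 | a31 | a41 | a32 | a42 | a43.

(* a letter is an atom or its inverse (true = inverse) *)
Definition letter : Type := (atom * bool)%type.
Definition word : Type := list letter.

Definition pos (a : atom) : letter := (a, false).
Definition ngt (a : atom) : letter := (a, true).
Definition linv (l : letter) : letter := (fst l, negb (snd l)).
Definition winv (w : word) : word := rev (map linv w).

(* Defining relations of the BKL presentation of B_4, as pairs of positive words:
   (1) a_ts a_rq = a_rq a_ts  when (t-r)(t-q)(s-r)(s-q) > 0
       (here: {a43,a21} and {a41,a32});
   (2) a_ts a_sr = a_tr a_ts = a_sr a_tr  for t > s > r. *)
Definition bkl_rel (l r : word) : Prop :=
  (l = [pos a43; pos a21] /\ r = [pos a21; pos a43]) \/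
  (l = [pos a41; pos a32] /\ r = [pos a32; pos a41]) \/
  (exists ts sr tr : atom,
     (* (t,s,r) = (3,2,1), (4,2,1), (4,3,1), (4,3,2) respectively *)
     ((ts, sr, tr) = (a32, a21, a31) \/ (ts, sr, tr) = (a42, a21, a41) \/
      (ts, sr, tr) = (a43, a31, a41) \/ (ts, sr, tr) = (a43, a32, a42)) /\
     ((l = [pos ts; pos sr] /\ r = [pos tr; pos ts]) \/
      (l = [pos tr; pos ts] /\ r = [pos sr; pos tr]))).

Inductive bstep : word -> word -> Prop :=
  | bstep_cancel : forall p q x, bstep (p ++ [x; linv x] ++ q) (p ++ q)
  | bstep_rel : forall p q l r, bkl_rel l r -> bstep (p ++ l ++ q) (p ++ r ++ q).

Inductive beq : word -> word -> Prop :=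
  | beq_refl : forall w, beq w w
  | beq_step : forall u v, bstep u v -> beq u v
  | beq_sym : forall u v, beq u v -> beq v u
  | beq_trans : forall u v w, beq u v -> beq v w -> beq u w.

Definition delta : word := [pos a43; pos a32; pos a21].

Definition dpow (k : Z) : word :=
  match k with
  | Z0 => []
  | Zpos p => concat (repeat delta (Pos.to_nat p))
  | Zneg p => concat (repeat (winv delta) (Pos.to_nat p))
  end.

(* Vertices of X: right cosets g<delta> of B_4; g represents the vertex [g]. *)
Definition vsame (g h : word) : Prop := exists k : Z, beq h (g ++ dpow k).

(* Side atoms (chords joining cyclically adjacent points); the two diagonal
   atoms a31, a42 give diagonals of lozenges, not edges of X. *)
Definition side (a : atom) : Prop := a = a21 \/ a = a32 \/ a = a43 \/ a = a41.

Record edge : Type := Edge { e_base : word; e_atom : atom }.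
Definition isEdge (e : edge) : Prop := side (e_atom e).
Definition e_src (e : edge) : word := e_base e.
Definition e_tgt (e : edge) : word := e_base e ++ [pos (e_atom e)].

Definition edgeEq (e f : edge) : Prop :=
  (vsame (e_src e) (e_src f) /\ vsame (e_tgt e) (e_tgt f)) \/
  (vsame (e_src e) (e_tgt f) /\ vsame (e_tgt e) (e_src f)).

(* Tri g x y z : equilateral triangle with vertices [g],[gx],[gxy], where
                 x,y,z are side atoms with x y z = delta.
   Loz g u v   : lozenge with vertices [g],[gu],[guv],[gv], where {u,v} is
                 one of the commuting pairs {a43,a21}, {a41,a32}. *)
Inductive face : Type :=
  | Tri : word -> atom -> atom -> atom -> face
  | Loz : word -> atom -> atom -> face.

Definition isFace (F : face) : Prop :=
  match F with
  | Tri g x y z => side x /\ side y /\ side z /\ beq [pos x; pos y; pos z] delta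
  | Loz g u v => (u = a43 /\ v = a21) \/ (u = a21 /\ v = a43) \/
                 (u = a41 /\ v = a32) \/ (u = a32 /\ v = a41)
  end.

Definition isTriangle (F : face) : Prop :=
  match F with Tri _ _ _ _ => True | Loz _ _ _ => False end.

Definition face_vertices (F : face) : list word :=
  match F with
  | Tri g x y z => [g; g ++ [pos x]; g ++ [pos x; pos y]]
  | Loz g u v => [g; g ++ [pos u]; g ++ [pos u; pos v]; g ++ [pos v]]
  end.

Definition face_edges (F : face) : list edge :=
  match F with
  | Tri g x y z => [Edge g x; Edge (g ++ [pos x]) y; Edge (g ++ [pos x; pos y]) z]
  | Loz g u v => [Edge g u; Edge (g ++ [pos u]) v; Edge g v; Edge (g ++ [pos v]) u]
  end.

Definition vIn (g : word) (F : face) : Prop :=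
  exists h, In h (face_vertices F) /\ vsame g h.
Definition eIn (e : edge) (F : face) : Prop :=
  exists f, In f (face_edges F) /\ edgeEq e f.
Definition vOnEdge (g : word) (e : edge) : Prop :=
  vsame g (e_src e) \/ vsame g (e_tgt e).

Definition faceEq (F G : face) : Prop :=
  (forall h, In h (face_vertices F) -> vIn h G) /\
  (forall h, In h (face_vertices G) -> vIn h F).

(* A set of faces of X is represented by a predicate on face data which is
   closed under change of representative. *)
Definition faceSet (S : face -> Prop) : Prop :=
  (forall F, S F -> isFace F) /\
  (forall F G, S F -> isFace G -> faceEq F G -> S G).

Inductive chain (R : face -> face -> Prop) : face -> face -> Prop :=
  | chain_refl : forall F, chain R F F
  | chain_step : forall F G H, R F G -> chain R G H -> chain R F H.

Definition HamiltonianSurface (S : face -> Prop) : Prop :=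
  faceSet S /\
  (forall F G, S F -> S G ->
     chain (fun A B => S A /\ S B /\ exists g, vIn g A /\ vIn g B) F G) /\
  (forall g : word, exists F, S F /\ vIn g F) /\
  (forall e, isEdge e -> exists F, S F /\ eIn e F) /\
  (* surface without boundary: every edge of S lies in exactly two faces of S *)
  (forall e, isEdge e -> (exists F, S F /\ eIn e F) ->
     exists F1 F2, S F1 /\ S F2 /\ eIn e F1 /\ eIn e F2 /\ ~ faceEq F1 F2 /\
       forall F, S F -> eIn e F -> faceEq F F1 \/ faceEq F F2) /\
  (* no multiple vertex: at each vertex g the faces of S containing g form a
     single disk, i.e. they are connected through edges of S at g *)
  (forall g F G, S F -> S G -> vIn g F -> vIn g G ->
     chain (fun A B => S A /\ S B /\ vIn g A /\ vIn g B /\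
              exists e, isEdge e /\ vOnEdge g e /\ eIn e A /\ eIn e B) F G).

(* Main.v *)
Require Import Defs.
From Stdlib Require Import List ZArith Lia Bool ClassicalEpsilon Classical.
Import ListNotations.


Lemma bstep_ctx : forall u v p q, bstep u v -> bstep (p ++ u ++ q) (p ++ v ++ q).
Proof.
  intros u v p q H. destruct H as [p0 q0 x|p0 q0 l r Hr].
  - replace (p ++ (p0 ++ [x; linv x] ++ q0) ++ q) with ((p ++ p0) ++ [x; linv x] ++ (q0 ++ q))
      by (repeat rewrite <- app_assoc; reflexivity).
    replace (p ++ (p0 ++ q0) ++ q) with ((p ++ p0) ++ (q0 ++ q)) by (repeat rewrite <- app_assoc; reflexivity).
    constructor.
  - replace (p ++ (p0 ++ l ++ q0) ++ q) with ((p ++ p0) ++ l ++ (q0 ++ q))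
      by (repeat rewrite <- app_assoc; reflexivity).
    replace (p ++ (p0 ++ r ++ q0) ++ q) with ((p ++ p0) ++ r ++ (q0 ++ q))
      by (repeat rewrite <- app_assoc; reflexivity).
    constructor; auto.
Qed.

Lemma beq_ctx : forall u v p q, beq u v -> beq (p ++ u ++ q) (p ++ v ++ q).
Proof.
  intros u v p q H. induction H.
  - apply beq_refl.
  - apply beq_step, bstep_ctx; auto.
  - apply beq_sym; auto.
  - eapply beq_trans; eauto.
Qed.

Lemma beq_appl : forall p u v, beq u v -> beq (p ++ u) (p ++ v).
Proof. intros. pose proof (beq_ctx u v p [] H). rewrite !app_nil_r in H0. exact H0. Qed.
Lemma beq_appr : forall q u v, beq u v -> beq (u ++ q) (v ++ q).
Proof. intros. pose proof (beq_ctx u v [] q H). exact H0. Qed.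
Lemma beq_app : forall a b c d, beq a b -> beq c d -> beq (a ++ c) (b ++ d).
Proof. intros. eapply beq_trans. apply beq_appr; eauto. apply beq_appl; auto. Qed.

Lemma linv_linv : forall l, linv (linv l) = l.
Proof. intros [a b]; unfold linv; simpl; rewrite negb_involutive; reflexivity. Qed.

Lemma beq_cancel1 : forall x, beq [x; linv x] [].
Proof. intros. apply beq_step. pose proof (bstep_cancel [] [] x). simpl in H. exact H. Qed.

Lemma winv_app : forall u v, winv (u ++ v) = winv v ++ winv u.
Proof. intros. unfold winv. rewrite map_app, rev_app_distr. reflexivity. Qed.

Lemma beq_cancel_r : forall w, beq (w ++ winv w) [].
Proof.
  induction w as [|x w IH]; simpl.
  - apply beq_refl.
  - unfold winv; simpl. fold (winv w).
    replace (x :: w ++ winv w ++ [linv x]) with ([x] ++ (w ++ winv w) ++ [linv x])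
      by (simpl; rewrite <- app_assoc; reflexivity).
    eapply beq_trans. apply beq_ctx. exact IH. simpl. apply beq_cancel1.
Qed.

Lemma winv_winv : forall w, winv (winv w) = w.
Proof.
  intros. unfold winv. rewrite map_rev, rev_involutive, map_map.
  rewrite <- (map_id w) at 2. apply map_ext. apply linv_linv.
Qed.

Lemma beq_cancel_l : forall w, beq (winv w ++ w) [].
Proof. intros. pose proof (beq_cancel_r (winv w)). rewrite winv_winv in H. exact H. Qed.

Definition atom_eq_dec : forall a b : atom, {a = b} + {a <> b}.
Proof. decide equality. Defined.
Definition letter_eq_dec : forall a b : letter, {a = b} + {a <> b}.
Proof. decide equality. apply bool_dec. apply atom_eq_dec. Defined.
Definition weq (u v : word) : bool := if list_eq_dec letter_eq_dec u v then true else false.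
Lemma weq_ok : forall u v, weq u v = true -> u = v.
Proof. intros u v; unfold weq; destruct (list_eq_dec letter_eq_dec u v); congruence. Qed.
Definition wmem (u : word) (s : list word) : bool := existsb (weq u) s.
Lemma wmem_ok : forall u s, wmem u s = true -> In u s.
Proof.
  intros u s H. unfold wmem in H. apply existsb_exists in H. destruct H as [x [Hx Hw]].
  apply weq_ok in Hw. subst; auto.
Qed.

Definition P := pos.
Definition rels : list (word * word) :=
  [ ([P a43; P a21], [P a21; P a43]);
    ([P a41; P a32], [P a32; P a41]);
    ([P a32; P a21], [P a31; P a32]); ([P a31; P a32], [P a21; P a31]);
    ([P a42; P a21], [P a41; P a42]); ([P a41; P a42], [P a21; P a41]);
    ([P a43; P a31], [P a41; P a43]); ([P a41; P a43], [P a31; P a41]);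
    ([P a43; P a32], [P a42; P a43]); ([P a42; P a43], [P a32; P a42]) ].

Lemma rels_ok : forall l r, In (l, r) rels -> beq l r.
Proof.
  intros l r H. unfold rels in H.
  assert (bkl_rel l r).
  { unfold bkl_rel, P in *. simpl in H.
    repeat (destruct H as [H|H]; [inversion H; subst; clear H|]); try (exfalso; exact H).
    - left; auto.
    - right; left; auto.
    - right; right; exists a32, a21, a31; split; [left; reflexivity| left; auto].
    - right; right; exists a32, a21, a31; split; [left; reflexivity| right; auto].
    - right; right; exists a42, a21, a41; split; [right; left; reflexivity| left; auto].
    - right; right; exists a42, a21, a41; split; [right; left; reflexivity| right; auto].
    - right; right; exists a43, a31, a41; split; [right; right; left; reflexivity| left; auto].
    - right; right; exists a43, a31, a41; split; [right; right; left; reflexivity| right; auto].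
    - right; right; exists a43, a32, a42; split; [right; right; right; reflexivity| left; auto].
    - right; right; exists a43, a32, a42; split; [right; right; right; reflexivity| right; auto]. }
  apply beq_step. pose proof (bstep_rel [] [] l r H0). rewrite !app_nil_r in H1. exact H1.
Qed.

Definition rels2 : list (word * word) := rels ++ map (fun p => (snd p, fst p)) rels.
Lemma rels2_ok : forall l r, In (l, r) rels2 -> beq l r.
Proof.
  intros l r H. unfold rels2 in H. apply in_app_or in H. destruct H.
  - apply rels_ok; auto.
  - apply in_map_iff in H. destruct H as [[a b] [E H]]. simpl in E. inversion E; subst.
    apply beq_sym, rels_ok; auto.
Qed.

Fixpoint isprefix (l w : word) : bool :=
  match l, w with
  | [], _ => true
  | x :: l', y :: w' => if letter_eq_dec x y then isprefix l' w' else false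
  | _, _ => false
  end.
Lemma isprefix_ok : forall l w, isprefix l w = true -> w = l ++ skipn (length l) w.
Proof.
  induction l; intros w H; simpl; auto.
  destruct w; simpl in H; try discriminate.
  destruct (letter_eq_dec a l0); try discriminate. subst. simpl. f_equal. auto.
Qed.

Fixpoint moves1 (l r : word) (w : word) : list word :=
  match w with
  | [] => []
  | x :: w' => (if isprefix l w then [r ++ skipn (length l) w] else []) ++ map (cons x) (moves1 l r w')
  end.
Lemma moves1_ok : forall l r, beq l r -> forall w w', In w' (moves1 l r w) -> beq w w'.
Proof.
  intros l r Hlr. induction w; intros w' H; simpl in H; [contradiction|].
  apply in_app_or in H. destruct H as [H|H].
  - destruct (isprefix l (a :: w)) eqn:E; [|contradiction].
    destruct H as [H|[]]. subst. apply isprefix_ok in E. rewrite E at 1.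
    apply beq_appr; auto.
  - apply in_map_iff in H. destruct H as [x [E H]]. subst.
    apply (beq_appl [a]). auto.
Qed.

Definition allmoves (w : word) : list word := flat_map (fun p => moves1 (fst p) (snd p) w) rels2.
Lemma allmoves_ok : forall w w', In w' (allmoves w) -> beq w w'.
Proof.
  intros w w' H. unfold allmoves in H. apply in_flat_map in H. destruct H as [[l r] [Hp H]].
  eapply moves1_ok; eauto. apply rels2_ok; auto.
Qed.

Fixpoint dedup (acc : list word) (s : list word) : list word :=
  match s with
  | [] => acc
  | x :: s' => if wmem x acc then dedup acc s' else dedup (x :: acc) s'
  end.
Lemma dedup_in : forall s acc x, In x (dedup acc s) -> In x acc \/ In x s.
Proof.
  induction s; simpl; intros; auto.
  destruct (wmem a acc); apply IHs in H; simpl in H; tauto.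
Qed.

Fixpoint clos (fuel : nat) (seen front : list word) : list word :=
  match fuel with
  | O => seen
  | S n =>
      let nw := dedup [] (filter (fun x => negb (wmem x seen)) (flat_map allmoves front)) in
      match nw with [] => seen | _ => clos n (nw ++ seen) nw end
  end.
Lemma clos_ok : forall w0 fuel seen front,
  (forall x, In x seen -> beq w0 x) -> (forall x, In x front -> beq w0 x) ->
  forall x, In x (clos fuel seen front) -> beq w0 x.
Proof.
  intros w0 fuel. induction fuel; intros seen front Hs Hf x Hx; simpl in Hx; auto.
  set (nw := dedup [] _) in Hx.
  assert (Hn : forall y, In y nw -> beq w0 y).
  { intros y Hy. apply dedup_in in Hy. destruct Hy as [[]|Hy].
    apply filter_In in Hy. destruct Hy as [Hy _]. apply in_flat_map in Hy.
    destruct Hy as [z [Hz Hy]]. eapply beq_trans. apply Hf; eauto. apply allmoves_ok; auto. }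
  destruct nw; auto.
  eapply IHfuel; [| | exact Hx]; auto.
  intros y Hy. apply in_app_or in Hy. destruct Hy; auto.
Qed.

Lemma closeq_ok : forall n u v, wmem v (clos n [u] [u]) = true -> beq u v.
Proof.
  intros n u v H. apply wmem_ok in H.
  apply (clos_ok u n [u] [u]); [| | exact H].
  - intros x [<-|[]]; apply beq_refl.
  - intros x [<-|[]]; apply beq_refl.
Qed.
Definition poseq (u v : word) : bool := wmem v (clos 60 [u] [u]).
Lemma poseq_ok : forall u v, poseq u v = true -> beq u v.
Proof. intros u v. exact (closeq_ok 60 u v). Qed.

Definition rho (a : atom) : atom :=
  match a with a21 => a41 | a31 => a42 | a41 => a43 | a32 => a21 | a42 => a31 | a43 => a32 end.
Definition rhol (l : letter) : letter := (rho (fst l), snd l).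
Definition rhow (w : word) : word := map rhol w.

Lemma delta_pos : forall a, beq (delta ++ [pos a]) ([pos (rho a)] ++ delta).
Proof. destruct a; apply poseq_ok; vm_compute; reflexivity. Qed.

Lemma conj_inv : forall x l l', beq (x ++ [l]) ([l'] ++ x) -> beq (x ++ [linv l]) ([linv l'] ++ x).
Proof.
  intros x l l' H.
  assert (H1 : beq ([] ++ (x ++ [linv l]) ++ []) ([] ++ ([linv l'; l'] ++ x ++ [linv l]) ++ [])).
  { apply beq_sym. pose proof (beq_cancel1 (linv l')). rewrite linv_linv in H0.
    pose proof (beq_ctx _ _ [] (x ++ [linv l]) H0). simpl in H1. simpl. rewrite app_nil_r. exact H1. }
  simpl in H1. rewrite app_nil_r in H1.
  assert (H2 : beq ([linv l'] ++ ([l'] ++ x) ++ [linv l]) ([linv l'] ++ (x ++ [l]) ++ [linv l])).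
  { apply beq_ctx. apply beq_sym; exact H. }
  assert (H3 : beq ((linv l' :: x) ++ [l; linv l] ++ []) ((linv l' :: x) ++ [] ++ [])).
  { apply beq_ctx. apply beq_cancel1. }
  rewrite !app_nil_r in H3.
  eapply beq_trans. exact H1. simpl in H2. rewrite <- !app_assoc in H2. simpl in H2.
  eapply beq_trans. exact H2. simpl in H3. simpl. exact H3.
Qed.

Lemma delta_l : forall l, beq (delta ++ [l]) ([rhol l] ++ delta).
Proof.
  intros [a b]. destruct b.
  - pose proof (conj_inv _ _ _ (delta_pos a)). exact H.
  - exact (delta_pos a).
Qed.

Lemma D1 : forall s, beq (delta ++ s) (rhow s ++ delta).
Proof.
  induction s as [|l s IH].
  - apply beq_refl.
  - replace (delta ++ l :: s) with ((delta ++ [l]) ++ s) by (rewrite <- app_assoc; reflexivity).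
    eapply beq_trans. apply beq_appr. apply delta_l.
    simpl. apply (beq_appl [rhol l]). exact IH.
Qed.

Definition rhon (n : nat) (s : word) : word := Nat.iter n rhow s.

Lemma rho4 : forall s, rhow (rhow (rhow (rhow s))) = s.
Proof.
  induction s as [|[a b] s IH]; simpl; auto. unfold rhow in *. simpl. rewrite IH.
  destruct a; reflexivity.
Qed.

Lemma rhon_S : forall n s, rhon (S n) s = rhow (rhon n s).
Proof. reflexivity. Qed.
Lemma rhon_add : forall n m s, rhon (n + m) s = rhon n (rhon m s).
Proof. intros. unfold rhon. apply Nat.iter_add. Qed.
Lemma rhon_4 : forall s, rhon 4 s = s.
Proof. intros. apply rho4. Qed.
Lemma rhon_mod : forall n s, rhon n s = rhon (n mod 4) s.
Proof.
  intros n s. rewrite (Nat.div_mod_eq n 4) at 1. rewrite rhon_add.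
  generalize (rhon (n mod 4) s) as t. intros t. induction (n / 4) as [|q IH]. reflexivity.
  replace (4 * S q) with (4 + 4 * q) by lia. rewrite rhon_add, IH. apply rhon_4.
Qed.
Lemma rhon_app : forall n u v, rhon n (u ++ v) = rhon n u ++ rhon n v.
Proof.
  induction n; intros; simpl; auto. unfold rhon in *. simpl. rewrite IHn. unfold rhow. apply map_app.
Qed.

Definition dn (n : nat) : word := concat (repeat delta n).
Definition di (n : nat) : word := concat (repeat (winv delta) n).

Lemma concat_repeat_S : forall (x : word) n, concat (repeat x (S n)) = concat (repeat x n) ++ x.
Proof.
  intros x n. induction n. simpl. rewrite app_nil_r; reflexivity.
  transitivity (x ++ concat (repeat x (S n))). reflexivity. rewrite IHn at 1. rewrite app_assoc. reflexivity.
Qed.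

Lemma Dn : forall n s, beq (dn n ++ s) (rhon n s ++ dn n).
Proof.
  induction n; intros s.
  - unfold dn, rhon; simpl. rewrite app_nil_r. apply beq_refl.
  - change (dn (S n)) with (delta ++ dn n). rewrite <- app_assoc.
    eapply beq_trans. apply beq_appl. apply IHn.
    rewrite app_assoc. eapply beq_trans. apply beq_appr. apply D1.
    rewrite <- app_assoc. apply beq_refl.
Qed.

Lemma Dinv1 : forall s, beq (winv delta ++ s) (rhon 3 s ++ winv delta).
Proof.
  intros s.
  apply beq_trans with (winv delta ++ s ++ delta ++ winv delta).
  - apply beq_appl. apply beq_sym. pose proof (beq_ctx _ _ s [] (beq_cancel_r delta)).
    rewrite !app_nil_r in H. exact H.
  - apply beq_trans with (winv delta ++ delta ++ rhon 3 s ++ winv delta).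
    + apply beq_appl. rewrite !app_assoc. apply beq_appr.
      pose proof (D1 (rhon 3 s)). apply beq_sym. 
      change (rhow (rhon 3 s)) with (rhon 4 s) in H. rewrite rhon_4 in H. exact H.
    + rewrite app_assoc. pose proof (beq_ctx _ _ [] (rhon 3 s ++ winv delta) (beq_cancel_l delta)).
      simpl in H. exact H.
Qed.

Lemma Di : forall n s, beq (di n ++ s) (rhon (3 * n) s ++ di n).
Proof.
  induction n; intros s.
  - unfold di, rhon; simpl. rewrite app_nil_r. apply beq_refl.
  - change (di (S n)) with (winv delta ++ di n). rewrite <- app_assoc.
    eapply beq_trans. apply beq_appl. apply IHn.
    rewrite app_assoc. eapply beq_trans. apply beq_appr. apply Dinv1.
    rewrite <- app_assoc. replace (3 * S n) with (3 + 3 * n) by lia.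
    rewrite rhon_add. apply beq_refl.
Qed.

Lemma dpow_pos : forall n, dpow (Z.of_nat n) = dn n.
Proof.
  intros [|n]; simpl; auto. rewrite SuccNat2Pos.id_succ. reflexivity.
Qed.
Lemma dpow_neg : forall n, dpow (- Z.of_nat n)%Z = di n.
Proof.
  intros [|n]; simpl; auto. rewrite SuccNat2Pos.id_succ. reflexivity.
Qed.
Lemma Z_cases : forall k : Z, exists n, k = Z.of_nat n \/ k = (- Z.of_nat n)%Z.
Proof.
  intros k. exists (Z.abs_nat k). destruct (Z.le_ge_cases 0 k); [left|right]; lia.
Qed.

Definition rz (k : Z) : nat :=
  match k with Z0 => 0 | Zpos p => Pos.to_nat p | Zneg p => 3 * Pos.to_nat p end.

Lemma DZ : forall k s, beq (dpow k ++ s) (rhon (rz k) s ++ dpow k).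
Proof.
  intros [|p|p] s; simpl.
  - rewrite app_nil_r; apply beq_refl.
  - apply Dn.
  - apply Di.
Qed.

Lemma dn_di : forall n, beq (dn n ++ di n) [].
Proof.
  induction n. apply beq_refl.
  unfold dn, di in *. rewrite concat_repeat_S. simpl. rewrite <- app_assoc.
  apply beq_trans with (concat (repeat delta n) ++ concat (repeat (winv delta) n)); auto.
  rewrite app_assoc. pose proof (beq_ctx _ _ (concat (repeat delta n)) (concat (repeat (winv delta) n)) (beq_cancel_r delta)).
  simpl in H. rewrite <- !app_assoc. exact H.
Qed.
Lemma di_dn : forall n, beq (di n ++ dn n) [].
Proof.
  induction n. apply beq_refl.
  unfold dn, di in *. rewrite concat_repeat_S. simpl. rewrite <- app_assoc.
  apply beq_trans with (concat (repeat (winv delta) n) ++ concat (repeat delta n)); auto.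
  rewrite app_assoc. pose proof (beq_ctx _ _ (concat (repeat (winv delta) n)) (concat (repeat delta n)) (beq_cancel_l delta)).
  simpl in H. rewrite <- !app_assoc. exact H.
Qed.
Lemma dpow_opp : forall k, beq (dpow k ++ dpow (- k)%Z) [].
Proof.
  intros k. destruct (Z_cases k) as [n [->| ->]].
  - rewrite dpow_pos, dpow_neg. apply dn_di.
  - rewrite Z.opp_involutive, dpow_pos, dpow_neg. apply di_dn.
Qed.

Lemma dpow_succ : forall k, beq (dpow (Z.succ k)) (dpow k ++ delta).
Proof.
  intros k. destruct (Z_cases k) as [n [->| ->]].
  - rewrite <- Nat2Z.inj_succ, !dpow_pos. unfold dn. rewrite concat_repeat_S. apply beq_refl.
  - destruct n as [|n].
    + apply beq_refl.
    + replace (Z.succ (- Z.of_nat (S n))) with (- Z.of_nat n)%Z by lia.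
      rewrite !dpow_neg. unfold di. rewrite concat_repeat_S. rewrite <- app_assoc.
      pose proof (beq_ctx _ _ (concat (repeat (winv delta) n)) [] (beq_cancel_l delta)).
      rewrite !app_nil_r in H. apply beq_sym. exact H.
Qed.

Lemma dpow_pred : forall k, beq (dpow (Z.pred k)) (dpow k ++ winv delta).
Proof.
  intros k. pose proof (dpow_succ (Z.pred k)). rewrite Z.succ_pred in H.
  apply beq_trans with (dpow (Z.pred k) ++ delta ++ winv delta).
  - pose proof (beq_appl (dpow (Z.pred k)) _ _ (beq_cancel_r delta)). rewrite app_nil_r in H0.
    apply beq_sym; exact H0.
  - rewrite app_assoc. apply beq_appr. apply beq_sym; exact H.
Qed.

Lemma dpow_add : forall a b, beq (dpow a ++ dpow b) (dpow (a + b)).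
Proof.
  intros a b. induction b using Z.peano_ind.
  - rewrite Z.add_0_r. simpl. rewrite app_nil_r. apply beq_refl.
  - eapply beq_trans. apply beq_appl. apply dpow_succ. rewrite app_assoc.
    eapply beq_trans. apply beq_appr. exact IHb. rewrite Z.add_succ_r. apply beq_sym, dpow_succ.
  - apply beq_trans with (dpow a ++ dpow (Z.pred b) ++ delta ++ winv delta).
    + apply beq_appl. pose proof (beq_appl (dpow (Z.pred b)) _ _ (beq_cancel_r delta)).
      rewrite app_nil_r in H. apply beq_sym; exact H.
    + rewrite (app_assoc (dpow (Z.pred b))).
      apply beq_trans with (dpow a ++ dpow b ++ winv delta).
      * apply beq_appl. apply beq_appr. apply beq_sym. pose proof (dpow_succ (Z.pred b)).
        rewrite Z.succ_pred in H. exact H.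
      * rewrite app_assoc. eapply beq_trans. apply beq_appr. exact IHb.
        rewrite Z.add_pred_r. apply beq_sym, dpow_pred.
Qed.

Lemma vs_refl : forall x, vsame x x.
Proof. intros. exists 0%Z. simpl. rewrite app_nil_r. apply beq_refl. Qed.
Lemma vs_sym : forall x y, vsame x y -> vsame y x.
Proof.
  intros x y [k H]. exists (- k)%Z.
  apply beq_trans with (x ++ dpow k ++ dpow (- k)).
  - pose proof (beq_appl x _ _ (dpow_opp k)). rewrite app_nil_r in H0. apply beq_sym; exact H0.
  - rewrite app_assoc. apply beq_appr. apply beq_sym; exact H.
Qed.
Lemma vs_trans : forall x y z, vsame x y -> vsame y z -> vsame x z.
Proof.
  intros x y z [a Ha] [b Hb]. exists (a + b)%Z.
  eapply beq_trans. exact Hb. eapply beq_trans. apply beq_appr. exact Ha.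
  rewrite <- app_assoc. apply beq_appl. apply dpow_add.
Qed.
Lemma vs_beq : forall x y, beq x y -> vsame x y.
Proof. intros. exists 0%Z. simpl. rewrite app_nil_r. apply beq_sym; auto. Qed.

Lemma vshift : forall x y, vsame x y -> exists j, j < 4 /\ forall s, vsame (x ++ s) (y ++ rhon j s).
Proof.
  intros x y [k H]. exists ((4 - rz k mod 4) mod 4). split. apply Nat.mod_upper_bound; lia.
  intros s. exists k.
  eapply beq_trans. apply beq_appr. exact H. rewrite <- !app_assoc. apply beq_appl.
  eapply beq_trans. apply DZ. rewrite <- rhon_add.
  rewrite rhon_mod. replace ((rz k + (4 - rz k mod 4) mod 4) mod 4) with 0.
  apply beq_refl.
  generalize (rz k). intros m.
  pose proof (Nat.div_mod_eq m 4). pose proof (Nat.mod_upper_bound m 4).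
  destruct (m mod 4) as [|[|[|[|r]]]] eqn:E; try lia.
  - rewrite Nat.sub_0_r. replace (4 mod 4) with 0 by reflexivity. rewrite Nat.add_0_r. symmetry; exact E.
  - replace ((4 - 1) mod 4) with 3 by reflexivity. replace (m + 3) with ((m/4 + 1) * 4) by lia. symmetry. apply Nat.Div0.mod_mul.
  - replace ((4 - 2) mod 4) with 2 by reflexivity. replace (m + 2) with ((m/4 + 1) * 4) by lia. symmetry. apply Nat.Div0.mod_mul.
  - replace ((4 - 3) mod 4) with 1 by reflexivity. replace (m + 1) with ((m/4 + 1) * 4) by lia. symmetry. apply Nat.Div0.mod_mul.
Qed.

Definition tab_a21_p : list nat := [0; 8; 4; 1; 6; 5; 2; 7; 3; 9; 17; 13; 10; 15; 14; 11; 16; 12; 18; 26; 22; 19; 24; 23; 20; 25; 21; 27; 35; 31; 28; 33; 32; 29; 34; 30; 36; 44; 40; 37; 42; 41; 38; 43; 39; 45; 53; 49; 46; 51; 50; 47; 52; 48; 54; 62; 58; 55; 60; 59; 56; 61; 57; 63; 71; 67; 64; 69; 68; 65; 70; 66; 72; 80; 76; 73; 78; 77; 74; 79; 75].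
Definition tab_a21_n : list nat := [0; 3; 6; 8; 2; 5; 4; 7; 1; 9; 12; 15; 17; 11; 14; 13; 16; 10; 18; 21; 24; 26; 20; 23; 22; 25; 19; 27; 30; 33; 35; 29; 32; 31; 34; 28; 36; 39; 42; 44; 38; 41; 40; 43; 37; 45; 48; 51; 53; 47; 50; 49; 52; 46; 54; 57; 60; 62; 56; 59; 58; 61; 55; 63; 66; 69; 71; 65; 68; 67; 70; 64; 72; 75; 78; 80; 74; 77; 76; 79; 73].
Definition tab_a31_p : list nat := [0; 20; 10; 14; 4; 21; 25; 15; 8; 1; 18; 11; 12; 5; 22; 26; 16; 6; 2; 19; 9; 13; 3; 23; 24; 17; 7; 27; 47; 37; 41; 31; 48; 52; 42; 35; 28; 45; 38; 39; 32; 49; 53; 43; 33; 29; 46; 36; 40; 30; 50; 51; 44; 34; 54; 74; 64; 68; 58; 75; 79; 69; 62; 55; 72; 65; 66; 59; 76; 80; 70; 60; 56; 73; 63; 67; 57; 77; 78; 71; 61].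
Definition tab_a31_n : list nat := [0; 9; 18; 22; 4; 13; 17; 26; 8; 20; 2; 11; 12; 21; 3; 7; 16; 25; 10; 19; 1; 5; 14; 23; 24; 6; 15; 27; 36; 45; 49; 31; 40; 44; 53; 35; 47; 29; 38; 39; 48; 30; 34; 43; 52; 37; 46; 28; 32; 41; 50; 51; 33; 42; 54; 63; 72; 76; 58; 67; 71; 80; 62; 74; 56; 65; 66; 75; 57; 61; 70; 79; 64; 73; 55; 59; 68; 77; 78; 60; 69].
Definition tab_a41_p : list nat := [0; 56; 28; 32; 4; 57; 61; 33; 8; 38; 10; 63; 67; 39; 14; 15; 71; 43; 73; 45; 20; 21; 77; 49; 53; 25; 78; 1; 54; 29; 30; 5; 58; 62; 34; 6; 36; 11; 64; 68; 40; 12; 16; 69; 44; 74; 46; 18; 22; 75; 50; 51; 26; 79; 2; 55; 27; 31; 3; 59; 60; 35; 7; 37; 9; 65; 66; 41; 13; 17; 70; 42; 72; 47; 19; 23; 76; 48; 52; 24; 80].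
Definition tab_a41_n : list nat := [0; 27; 54; 58; 4; 31; 35; 62; 8; 64; 10; 37; 41; 68; 14; 15; 42; 69; 47; 74; 20; 21; 48; 75; 79; 25; 52; 56; 2; 29; 30; 57; 3; 7; 34; 61; 36; 63; 9; 13; 40; 67; 71; 17; 44; 19; 46; 73; 77; 23; 50; 51; 78; 24; 28; 55; 1; 5; 32; 59; 60; 6; 33; 11; 38; 65; 66; 12; 39; 43; 70; 16; 72; 18; 45; 49; 76; 22; 26; 53; 80].
Definition tab_a32_p : list nat := [0; 1; 2; 24; 25; 26; 12; 13; 14; 3; 4; 5; 18; 19; 20; 15; 16; 17; 6; 7; 8; 21; 22; 23; 9; 10; 11; 27; 28; 29; 51; 52; 53; 39; 40; 41; 30; 31; 32; 45; 46; 47; 42; 43; 44; 33; 34; 35; 48; 49; 50; 36; 37; 38; 54; 55; 56; 78; 79; 80; 66; 67; 68; 57; 58; 59; 72; 73; 74; 69; 70; 71; 60; 61; 62; 75; 76; 77; 63; 64; 65].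
Definition tab_a32_n : list nat := [0; 1; 2; 9; 10; 11; 18; 19; 20; 24; 25; 26; 6; 7; 8; 15; 16; 17; 12; 13; 14; 21; 22; 23; 3; 4; 5; 27; 28; 29; 36; 37; 38; 45; 46; 47; 51; 52; 53; 33; 34; 35; 42; 43; 44; 39; 40; 41; 48; 49; 50; 30; 31; 32; 54; 55; 56; 63; 64; 65; 72; 73; 74; 78; 79; 80; 60; 61; 62; 69; 70; 71; 66; 67; 68; 75; 76; 77; 57; 58; 59].
Definition tab_a42_p : list nat := [0; 1; 2; 60; 61; 62; 30; 31; 32; 42; 43; 44; 12; 13; 14; 63; 64; 65; 75; 76; 77; 45; 46; 47; 24; 25; 26; 3; 4; 5; 54; 55; 56; 33; 34; 35; 36; 37; 38; 15; 16; 17; 66; 67; 68; 78; 79; 80; 48; 49; 50; 18; 19; 20; 6; 7; 8; 57; 58; 59; 27; 28; 29; 39; 40; 41; 9; 10; 11; 69; 70; 71; 72; 73; 74; 51; 52; 53; 21; 22; 23].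
Definition tab_a42_n : list nat := [0; 1; 2; 27; 28; 29; 54; 55; 56; 66; 67; 68; 12; 13; 14; 39; 40; 41; 51; 52; 53; 78; 79; 80; 24; 25; 26; 60; 61; 62; 6; 7; 8; 33; 34; 35; 36; 37; 38; 63; 64; 65; 9; 10; 11; 21; 22; 23; 48; 49; 50; 75; 76; 77; 30; 31; 32; 57; 58; 59; 3; 4; 5; 15; 16; 17; 42; 43; 44; 69; 70; 71; 72; 73; 74; 18; 19; 20; 45; 46; 47].
Definition tab_a43_p : list nat := [0; 1; 2; 3; 4; 5; 6; 7; 8; 72; 73; 74; 75; 76; 77; 78; 79; 80; 36; 37; 38; 39; 40; 41; 42; 43; 44; 9; 10; 11; 12; 13; 14; 15; 16; 17; 54; 55; 56; 57; 58; 59; 60; 61; 62; 45; 46; 47; 48; 49; 50; 51; 52; 53; 18; 19; 20; 21; 22; 23; 24; 25; 26; 63; 64; 65; 66; 67; 68; 69; 70; 71; 27; 28; 29; 30; 31; 32; 33; 34; 35].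
Definition tab_a43_n : list nat := [0; 1; 2; 3; 4; 5; 6; 7; 8; 27; 28; 29; 30; 31; 32; 33; 34; 35; 54; 55; 56; 57; 58; 59; 60; 61; 62; 72; 73; 74; 75; 76; 77; 78; 79; 80; 18; 19; 20; 21; 22; 23; 24; 25; 26; 45; 46; 47; 48; 49; 50; 51; 52; 53; 36; 37; 38; 39; 40; 41; 42; 43; 44; 63; 64; 65; 66; 67; 68; 69; 70; 71; 9; 10; 11; 12; 13; 14; 15; 16; 17].

Definition tab (l : letter) : list nat :=
  match l with
  | (a21, false) => tab_a21_p | (a21, true) => tab_a21_n
  | (a31, false) => tab_a31_p | (a31, true) => tab_a31_n
  | (a41, false) => tab_a41_p | (a41, true) => tab_a41_n
  | (a32, false) => tab_a32_p | (a32, true) => tab_a32_n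
  | (a42, false) => tab_a42_p | (a42, true) => tab_a42_n
  | (a43, false) => tab_a43_p | (a43, true) => tab_a43_n
  end.
Definition actl (l : letter) (x : nat) : nat := nth x (tab l) x.
Definition actw (w : word) (x : nat) : nat := fold_left (fun y l => actl l y) w x.

Lemma actw_app : forall u v x, actw (u ++ v) x = actw v (actw u x).
Proof. intros. unfold actw. apply fold_left_app. Qed.

Lemma tab_len : forall l, length (tab l) = 81.
Proof. intros [[] []]; reflexivity. Qed.

Lemma actw_big : forall w x, 81 <= x -> actw w x = x.
Proof.
  induction w; intros x H; simpl; auto. rewrite IHw. unfold actl. apply nth_overflow. rewrite tab_len; auto.
  unfold actl. rewrite nth_overflow; auto. rewrite tab_len; auto.
Qed.

Definition same_act (u v : word) : bool := forallb (fun x => Nat.eqb (actw u x) (actw v x)) (seq 0 81).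
Lemma same_act_ok : forall u v, same_act u v = true -> forall x, actw u x = actw v x.
Proof.
  intros u v H x. destruct (Nat.lt_ge_cases x 81).
  - unfold same_act in H. rewrite forallb_forall in H. apply Nat.eqb_eq. apply H. apply in_seq. lia.
  - rewrite !actw_big; auto.
Qed.

Definition all_letters : list letter :=
  flat_map (fun a => [(a, false); (a, true)]) [a21; a31; a41; a32; a42; a43].
Lemma all_letters_ok : forall l, In l all_letters.
Proof. intros [[] []]; simpl; tauto. Qed.

Lemma act_checks : forallb (fun p => same_act (fst p) (snd p)) rels = true /\
                   forallb (fun l => same_act [l; linv l] []) all_letters = true.
Proof. split; vm_compute; reflexivity. Qed.

Lemma bstep_act : forall u v, bstep u v -> forall x, actw u x = actw v x.
Proof.
  intros u v H. destruct H as [p q l|p q l r Hr]; intros x.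
  - rewrite !actw_app. f_equal. transitivity (actw [] (actw p x)); [|reflexivity]. apply same_act_ok.
    destruct act_checks as [_ H]. rewrite forallb_forall in H. apply H, all_letters_ok.
  - rewrite !actw_app. f_equal. apply same_act_ok.
    destruct act_checks as [H _]. rewrite forallb_forall in H.
    unfold bkl_rel in Hr.
    destruct Hr as [[-> ->]|[[-> ->]|[ts [sr [tr [Ht Hlr]]]]]].
    + apply (H (_, _)); simpl; tauto.
    + apply (H (_, _)); simpl; tauto.
    + destruct Ht as [Ht|[Ht|[Ht|Ht]]]; inversion Ht; subst;
      (destruct Hlr as [[-> ->]|[-> ->]]; apply (H (_, _)); simpl; tauto).
Qed.

Lemma beq_act : forall u v, beq u v -> forall x, actw u x = actw v x.
Proof.
  intros u v H. induction H; intros; auto.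
  - apply bstep_act; auto.
  - rewrite IHbeq1; auto.
Qed.

Definition lsign (l : letter) : Z := if snd l then (-1)%Z else 1%Z.
Definition lenZ (w : word) : Z := fold_right (fun l z => (lsign l + z)%Z) 0%Z w.
Lemma lenZ_app : forall u v, lenZ (u ++ v) = (lenZ u + lenZ v)%Z.
Proof. induction u; intros; simpl; auto. rewrite IHu. lia. Qed.

Lemma bstep_len : forall u v, bstep u v -> lenZ u = lenZ v.
Proof.
  intros u v H. destruct H as [p q l|p q l r Hr]; rewrite !lenZ_app.
  - destruct l as [a []]; simpl; lia.
  - unfold bkl_rel in Hr.
    destruct Hr as [[-> ->]|[[-> ->]|[ts [sr [tr [Ht [[-> ->]|[-> ->]]]]]]]]; simpl; lia.
Qed.
Lemma beq_len : forall u v, beq u v -> lenZ u = lenZ v.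
Proof.
  intros u v H. induction H; auto. apply bstep_len; auto. congruence.
Qed.

Lemma lenZ_dn : forall n, lenZ (dn n) = (3 * Z.of_nat n)%Z.
Proof. induction n. reflexivity. change (dn (S n)) with (delta ++ dn n). rewrite lenZ_app, IHn. simpl lenZ. lia. Qed.
Lemma lenZ_di : forall n, lenZ (di n) = (- 3 * Z.of_nat n)%Z.
Proof. induction n. reflexivity. change (di (S n)) with (winv delta ++ di n). rewrite lenZ_app, IHn. simpl lenZ. lia. Qed.
Lemma lenZ_dpow : forall k, lenZ (dpow k) = (3 * k)%Z.
Proof.
  intros k. destruct (Z_cases k) as [n [->| ->]].
  - rewrite dpow_pos, lenZ_dn. lia.
  - rewrite dpow_neg, lenZ_di. lia.
Qed.

Definition negcheck (u v : word) : bool :=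
  let d := (lenZ v - lenZ u)%Z in
  if Z.eqb (d mod 3) 0 then
    existsb (fun x => negb (Nat.eqb (actw v x) (actw (u ++ dpow (d / 3)) x))) (seq 0 81)
  else true.

Lemma negcheck_ok : forall u v, negcheck u v = true -> forall g, ~ vsame (g ++ u) (g ++ v).
Proof.
  intros u v H g [k Hk].
  pose proof (beq_len _ _ Hk) as HL. rewrite !lenZ_app, lenZ_dpow in HL.
  assert (Hd : (lenZ v - lenZ u)%Z = (3 * k)%Z) by lia.
  unfold negcheck in H. rewrite Hd in H.
  replace ((3 * k) mod 3)%Z with 0%Z in H by (rewrite Z.mul_comm, Z.mod_mul; lia).
  replace ((3 * k) / 3)%Z with k in H by (rewrite Z.mul_comm, Z.div_mul; lia).
  rewrite Z.eqb_refl in H. cbv beta iota in H. apply existsb_exists in H. destruct H as [y [_ Hy]].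
  pose proof (beq_act _ _ Hk (actw (winv g) y)) as HA.
  rewrite <- app_assoc in HA. rewrite !actw_app in HA.
  assert (E : actw g (actw (winv g) y) = y).
  { rewrite <- actw_app. rewrite (beq_act _ _ (beq_cancel_l g)). reflexivity. }
  rewrite E in HA. rewrite HA in Hy. rewrite actw_app in Hy. rewrite Nat.eqb_refl in Hy. discriminate.
Qed.

Lemma negcheck_beq : forall u v, negcheck u v = true -> ~ beq u v.
Proof. intros u v H Hb. apply (negcheck_ok u v H []). apply vs_beq. exact Hb. Qed.

Definition comp (a : atom) : word :=
  match a with
  | a21 => [pos a41; pos a43] | a31 => [pos a41; pos a32] | a41 => [pos a43; pos a32]
  | a32 => [pos a21; pos a41] | a42 => [pos a21; pos a43] | a43 => [pos a32; pos a21]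
  end.
Lemma comp_ok : forall a, beq ([pos a] ++ comp a) delta.
Proof. destruct a; apply poseq_ok; vm_compute; reflexivity. Qed.

Lemma negstep : forall x a s, vsame (x ++ comp a ++ rhon 3 s) (x ++ [ngt a] ++ s).
Proof.
  intros x a s. exists (-1)%Z. change (dpow (-1)) with (winv delta ++ []). rewrite app_nil_r.
  rewrite <- !app_assoc. apply beq_appl.
  apply beq_trans with ([ngt a] ++ delta ++ winv delta ++ s).
  - apply beq_appl. pose proof (beq_ctx _ _ [] s (beq_cancel_r delta)). cbn [app] in H.
    rewrite <- app_assoc in H. apply beq_sym; exact H.
  - apply beq_trans with ([ngt a] ++ ([pos a] ++ comp a) ++ winv delta ++ s).
    + apply beq_appl. apply beq_appr. apply beq_sym, comp_ok.
    + apply beq_trans with (comp a ++ winv delta ++ s).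
      * pose proof (beq_ctx _ _ [] (comp a ++ winv delta ++ s) (beq_cancel1 (ngt a))).
        cbn [app] in H. cbn [app]. exact H.
      * apply beq_appl. apply Dinv1.
Qed.

Fixpoint posify (n : nat) (acc s : word) : word :=
  match n with
  | O => acc ++ s
  | S n =>
    match s with
    | [] => acc
    | (a, false) :: s' => posify n (acc ++ [(a, false)]) s'
    | (a, true) :: s' => posify n (acc ++ comp a) (rhon 3 s')
    end
  end.

Lemma posify_ok : forall n acc s, vsame (acc ++ s) (posify n acc s).
Proof.
  induction n; intros acc s; simpl. apply vs_refl.
  destruct s as [|[a []] s'].
  - rewrite app_nil_r. apply vs_refl.
  - eapply vs_trans; [|apply IHn]. rewrite <- app_assoc. apply vs_sym. apply negstep.
  - pose proof (IHn (acc ++ [(a, false)]) s') as H. rewrite <- app_assoc in H. exact H.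
Qed.

Lemma posify_acc : forall n g acc s, posify n (g ++ acc) s = g ++ posify n acc s.
Proof.
  induction n; intros g acc s; simpl. rewrite app_assoc; auto.
  destruct s as [|[a []] s']; auto; rewrite <- app_assoc; apply IHn.
Qed.

Definition pf (w : word) : word := posify (length w) [] w.
Lemma pf_ok : forall g w, vsame (g ++ w) (g ++ pf w).
Proof.
  intros g w. unfold pf. rewrite <- posify_acc. rewrite app_nil_r. apply posify_ok.
Qed.

Definition vsauto (u v : word) : bool :=
  let pu := pf u in let pv := pf v in
  let d := (lenZ pv - lenZ pu)%Z in
  if Z.eqb (d mod 3) 0 then
    if Z.leb 0 d then poseq (pu ++ dpow (d / 3)) pv
    else poseq (pv ++ dpow ((- d) / 3)) pu
  else false.

Lemma vsauto_ok : forall u v, vsauto u v = true -> forall g, vsame (g ++ u) (g ++ v).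
Proof.
  intros u v H g. unfold vsauto in H.
  destruct (Z.eqb _ 0); [|discriminate].
  eapply vs_trans. apply pf_ok. eapply vs_trans; [|apply vs_sym, pf_ok].
  destruct (Z.leb _ _).
  - apply poseq_ok in H. eexists. rewrite <- app_assoc. apply beq_appl. apply beq_sym. exact H.
  - apply poseq_ok in H. apply vs_sym. eexists. rewrite <- app_assoc. apply beq_appl. apply beq_sym. exact H.
Qed.

Lemma vsauto_ok0 : forall u v, vsauto u v = true -> vsame u v.
Proof. intros u v H. exact (vsauto_ok u v H []). Qed.


Fixpoint fr (w : word) : word :=
  match w with
  | [] => []
  | l :: s => match fr s with
              | l' :: s' => if letter_eq_dec l' (linv l) then s' else l :: l' :: s'
              | [] => [l]
              end
  end.
Lemma fr_ok : forall w, beq w (fr w).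
Proof.
  induction w as [|l s IH]; simpl. apply beq_refl.
  apply beq_trans with (l :: fr s). apply (beq_appl [l]); auto.
  destruct (fr s) as [|l' s']. apply beq_refl.
  destruct (letter_eq_dec l' (linv l)). subst.
  pose proof (beq_ctx _ _ [] s' (beq_cancel1 l)). simpl in H. exact H.
  apply beq_refl.
Qed.

Definition vsauto2 (u v : word) : bool :=
  let pz := pf (fr (winv u ++ v)) in
  let d := lenZ pz in
  if Z.eqb (d mod 3) 0 then poseq (dpow (d / 3)) pz else false.

Lemma vsauto2_ok : forall u v, vsauto2 u v = true -> forall g, vsame (g ++ u) (g ++ v).
Proof.
  intros u v H g. unfold vsauto2 in H.
  set (z := fr (winv u ++ v)) in H. set (pz := pf z) in H.
  destruct (Z.eqb _ 0); [|discriminate].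
  apply poseq_ok in H.
  assert (H1 : vsame ((g ++ u) ++ []) ((g ++ u) ++ pz)).
  { exists (lenZ pz / 3)%Z. rewrite app_nil_r. apply beq_appl. apply beq_sym. exact H. }
  rewrite app_nil_r in H1.
  assert (H2 : vsame ((g ++ u) ++ z) ((g ++ u) ++ pz)) by apply pf_ok.
  assert (H3 : beq (g ++ v) ((g ++ u) ++ z)).
  { rewrite <- app_assoc. apply beq_appl. unfold z.
    apply beq_trans with ((u ++ winv u) ++ v).
    - pose proof (beq_appr v _ _ (beq_cancel_r u)). simpl in H0. apply beq_sym; exact H0.
    - rewrite <- app_assoc. apply beq_appl. apply fr_ok. }
  eapply vs_trans. exact H1. eapply vs_trans. apply vs_sym. exact H2. apply vs_sym, vs_beq. exact H3.
Qed.

Definition ClsOK (C : list (list word)) : Prop :=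
  forall m x, In x (nth m C []) -> beq (dpow (Z.of_nat m)) x.
Definition Cls : list (list word) :=
  map (fun m => clos 60 [dpow (Z.of_nat m)] [dpow (Z.of_nat m)]) [0; 1; 2].
Lemma clos_in : forall n u x, In x (clos n [u] [u]) -> beq u x.
Proof.
  intros n u x H. apply (clos_ok u n [u] [u]); [| | exact H].
  - intros y [<-|[]]; apply beq_refl.
  - intros y [<-|[]]; apply beq_refl.
Qed.
Lemma nth_map_in : forall (f : nat -> list word) l k x,
  In x (nth k (map f l) []) -> k < length l /\ In x (f (nth k l 0)).
Proof.
  induction l; intros k x H. destruct k; contradiction.
  destruct k; simpl in *. split; [lia|auto].
  apply IHl in H. split; [lia|tauto].
Qed.
Lemma Cls_ok : ClsOK Cls.
Proof.
  intros m x H. unfold Cls in H. apply nth_map_in in H. destruct H as [Hm H].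
  apply clos_in in H.
  assert (E : nth m [0; 1; 2] 0 = m) by (simpl in Hm; destruct m as [|[|[|]]]; simpl; lia).
  rewrite E in H. exact H.
Qed.

Lemma strip_neg : forall g t, vsame (g ++ winv delta ++ t) (g ++ rhon 3 t).
Proof.
  intros g t. apply vs_sym. exists (-1)%Z. change (dpow (-1)) with (winv delta ++ []). rewrite app_nil_r.
  rewrite <- !app_assoc. apply beq_appl. apply Dinv1.
Qed.
Lemma strip_pos : forall g t, vsame (g ++ delta ++ t) (g ++ rhow t).
Proof.
  intros g t. apply vs_sym. exists 1%Z. change (dpow 1) with (delta ++ []). rewrite app_nil_r.
  rewrite <- !app_assoc. apply beq_appl. apply D1.
Qed.

Lemma beq_winv : forall u v, beq u v -> beq (winv u) (winv v).
Proof.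
  intros u v H.
  apply beq_trans with (winv u ++ v ++ winv v).
  - pose proof (beq_appl (winv u) _ _ (beq_cancel_r v)). rewrite app_nil_r in H0. apply beq_sym; exact H0.
  - apply beq_trans with (winv u ++ u ++ winv v).
    + apply beq_appl. apply beq_appr. apply beq_sym; exact H.
    + rewrite app_assoc. pose proof (beq_appr (winv v) _ _ (beq_cancel_l u)). exact H0.
Qed.

Definition Dcls : list word := clos 60 [delta] [delta].
Lemma Dcls_ok : forall t, In t Dcls -> beq delta t.
Proof. intros t H. exact (clos_in _ _ _ H). Qed.

Fixpoint dstrip (D : list word) (n : nat) (s : word) : word :=
  match n with
  | O => s
  | S n =>
    match s with
    | [] => []
    | l :: s' =>
      if wmem (winv (firstn 3 s)) D then dstrip D n (rhon 3 (skipn 3 s))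
      else if wmem (firstn 3 s) D then dstrip D n (rhow (skipn 3 s))
      else l :: dstrip D n s'
    end
  end.

Lemma dstrip_ok : forall D, (forall t, In t D -> beq delta t) ->
  forall n g s, vsame (g ++ s) (g ++ dstrip D n s).
Proof.
  intros D HD. induction n; intros g s. apply vs_refl.
  destruct s as [|l s']. apply vs_refl.
  cbn [dstrip].
  set (s := l :: s').
  assert (Es : s = firstn 3 s ++ skipn 3 s) by (symmetry; apply firstn_skipn).
  destruct (wmem (winv (firstn 3 s)) D) eqn:E1.
  - apply wmem_ok, HD, beq_winv in E1. rewrite winv_winv in E1.
    eapply vs_trans; [|apply IHn].
    eapply vs_trans; [|apply strip_neg].
    apply vs_beq. rewrite Es at 1. apply beq_appl. apply beq_appr. apply beq_sym; exact E1.
  - destruct (wmem (firstn 3 s) D) eqn:E2.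
    + apply wmem_ok, HD in E2. eapply vs_trans; [|apply IHn].
      eapply vs_trans; [|apply strip_pos].
      apply vs_beq. rewrite Es at 1. apply beq_appl. apply beq_appr. apply beq_sym; exact E2.
    + pose proof (IHn (g ++ [l]) s') as H. rewrite <- !app_assoc in H. exact H.
Qed.

Definition zred (u v : word) : word :=
  let z0 := fr (winv u ++ v) in fr (dstrip Dcls (length z0) z0).

Lemma zred_ok : forall g u v, vsame ((g ++ u) ++ zred u v) (g ++ v).
Proof.
  intros g u v. unfold zred. set (z0 := fr (winv u ++ v)).
  apply vs_sym. eapply vs_trans with ((g ++ u) ++ z0).
  - apply vs_beq. rewrite <- app_assoc. apply beq_appl. unfold z0.
    apply beq_trans with ((u ++ winv u) ++ v).
    + pose proof (beq_appr v _ _ (beq_cancel_r u)). simpl in H. apply beq_sym; exact H.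
    + rewrite <- app_assoc. apply beq_appl. apply fr_ok.
  - eapply vs_trans. apply (dstrip_ok Dcls Dcls_ok). apply vs_beq. apply beq_appl. apply fr_ok.
Qed.

Definition vsC (C : list (list word)) (u v : word) : bool :=
  let pz := pf (zred u v) in
  let d := lenZ pz in
  if Z.eqb (d mod 3) 0 then wmem pz (nth (Z.to_nat (d / 3)) C []) else false.

Lemma vsC_ok : forall C, ClsOK C -> forall u v, vsC C u v = true -> forall g, vsame (g ++ u) (g ++ v).
Proof.
  intros C HC u v H g. unfold vsC in H.
  set (z := zred u v) in H. set (pz := pf z) in H.
  destruct (Z.eqb _ 0); [|discriminate].
  apply wmem_ok in H. apply HC in H.
  assert (H1 : vsame ((g ++ u) ++ []) ((g ++ u) ++ pz)).
  { eexists. rewrite app_nil_r. apply beq_appl. apply beq_sym. exact H. }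
  rewrite app_nil_r in H1.
  assert (H2 : vsame ((g ++ u) ++ z) ((g ++ u) ++ pz)) by apply pf_ok.
  eapply vs_trans. exact H1. eapply vs_trans. apply vs_sym. exact H2. apply zred_ok.
Qed.

Inductive shape := ShT (x y z : atom) | ShL (u v : atom).
Definition mk (sh : shape) (h : word) : face :=
  match sh with ShT x y z => Tri h x y z | ShL u v => Loz h u v end.
Definition shp (F : face) : shape :=
  match F with Tri _ x y z => ShT x y z | Loz _ u v => ShL u v end.
Definition fbase (F : face) : word := match F with Tri h _ _ _ => h | Loz h _ _ => h end.
Lemma mk_shp : forall F, F = mk (shp F) (fbase F).
Proof. destruct F; reflexivity. Qed.

Definition srel (sh : shape) : list word :=
  match sh with
  | ShT x y z => [[]; [pos x]; [pos x; pos y]]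
  | ShL u v => [[]; [pos u]; [pos u; pos v]; [pos v]]
  end.
Definition sedges (sh : shape) : list (word * word) :=
  match sh with
  | ShT x y z => [([], [pos x]); ([pos x], [pos x; pos y]); ([pos x; pos y], [pos x; pos y; pos z])]
  | ShL u v => [([], [pos u]); ([pos u], [pos u; pos v]); ([], [pos v]); ([pos v], [pos v; pos u])]
  end.

Lemma fv_mk : forall sh h, face_vertices (mk sh h) = map (fun r => h ++ r) (srel sh).
Proof. destruct sh; intros; simpl; rewrite app_nil_r; reflexivity. Qed.
Lemma fe_mk : forall sh h, map (fun f => (e_src f, e_tgt f)) (face_edges (mk sh h)) =
                           map (fun p => (h ++ fst p, h ++ snd p)) (sedges sh).
Proof.
  destruct sh; intros; simpl; unfold e_src, e_tgt; simpl; rewrite ?app_nil_r, <- ?app_assoc; reflexivity.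
Qed.

(* the twelve faces and eight edges at a vertex *)
Definition fsh (i : nat) : shape :=
  match i with
  | 0 => ShT a21 a41 a43 | 1 => ShT a32 a21 a41 | 2 => ShT a43 a32 a21 | 3 => ShT a41 a43 a32
  | 4 | 5 | 6 | 7 => ShL a43 a21
  | _ => ShL a41 a32
  end.
Definition fb (i : nat) : word :=
  match i with
  | 5 => [ngt a43] | 6 => [ngt a21] | 7 => [ngt a21; ngt a43]
  | 9 => [ngt a41] | 10 => [ngt a32] | 11 => [ngt a32; ngt a41]
  | _ => []
  end.
Definition fc (i : nat) (w : word) : face := mk (fsh i) (w ++ fb i).
Definition Ts (i : nat) : list word := map (fun r => fb i ++ r) (srel (fsh i)).
Definition Tedges (i : nat) : list (word * word) :=
  map (fun p => (fb i ++ fst p, fb i ++ snd p)) (sedges (fsh i)).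

Definition eb (j : nat) : word :=
  match j with 1 => [ngt a32] | 3 => [ngt a43] | 5 => [ngt a41] | 7 => [ngt a21] | _ => [] end.
Definition ea (j : nat) : atom :=
  match j with 0 | 7 => a21 | 1 | 2 => a32 | 3 | 4 => a43 | _ => a41 end.
Definition ed (j : nat) (w : word) : edge := Edge (w ++ eb j) (ea j).
Definition erel (j : nat) : word * word := (eb j, eb j ++ [pos (ea j)]).
Definition fe (j : nat) : list nat :=
  match j with
  | 0 => [0; 4; 5] | 1 => [0; 10; 11] | 2 => [1; 8; 9] | 3 => [1; 7; 5]
  | 4 => [2; 4; 6] | 5 => [2; 9; 11] | 6 => [3; 8; 10] | _ => [3; 6; 7]
  end.

Definition vm (C : list (list word)) (R T : word) : bool := negb (negcheck R T) && vsC C R T.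
Lemma vm_ok : forall R T, vm Cls R T = true -> forall g, vsame (g ++ R) (g ++ T).
Proof. intros R T H. apply andb_prop in H. destruct H. apply (vsC_ok Cls Cls_ok); auto. Qed.

Definition eeqb C (a b : word * word) : bool :=
  (vm C (fst a) (fst b) && vm C (snd a) (snd b)) || (vm C (fst a) (snd b) && vm C (snd a) (fst b)).
Definition ein_b C (j i : nat) : bool := existsb (eeqb C (erel j)) (Tedges i).
Definition nein_b (j i : nat) : bool :=
  forallb (fun t => negcheck (fst (erel j)) t) (Ts i) || forallb (fun t => negcheck (snd (erel j)) t) (Ts i).
Definition fneq_b (a b : nat) : bool :=
  existsb (fun t => forallb (fun t' => negcheck t t') (Ts b)) (Ts a).
Definition nmem (i : nat) (l : list nat) : bool := existsb (Nat.eqb i) l.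

Definition check_edges_C C : bool :=
  forallb (fun j => forallb (fun i => if nmem i (fe j) then ein_b C j i else nein_b j i) (seq 0 12)) (seq 0 8).
Definition check_edges : bool := check_edges_C Cls.
Definition check_distinct : bool :=
  forallb (fun a => forallb (fun b => Nat.eqb a b || fneq_b a b) (seq 0 12)) (seq 0 12).

Definition valid_shapes : list shape :=
  [ShT a21 a41 a43; ShT a32 a21 a41; ShT a43 a32 a21; ShT a41 a43 a32;
   ShL a43 a21; ShL a21 a43; ShL a41 a32; ShL a32 a41].
Definition feqb C (Rs Ts : list word) : bool :=
  forallb (fun R => existsb (vm C R) Ts) Rs && forallb (fun T => existsb (fun R => vm C R T) Rs) Ts.
Definition Rs (sh : shape) (q : word) (j : nat) : list word := map (fun r => rhon j (winv q ++ r)) (srel sh).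
Definition check_class_C C : bool :=
  forallb (fun sh => forallb (fun q => forallb (fun j =>
     existsb (fun i => feqb C (Rs sh q j) (Ts i)) (seq 0 12)) [0;1;2;3]) (srel sh)) valid_shapes.
Definition check_class : bool := check_class_C Cls.

Definition check_eclass_C C : bool :=
  forallb (fun a => forallb (fun q => forallb (fun j =>
    existsb (fun j' => eeqb C (rhon j (winv q ++ []), rhon j (winv q ++ [pos a])) (erel j')) (seq 0 8))
    [0;1;2;3]) [[]; [pos a]]) [a21; a32; a43; a41].
Definition check_eclass : bool := check_eclass_C Cls.
Definition check_sedges_C C : bool :=
  forallb (fun sh => forallb (fun p => existsb (fun r => vm C (fst p) r) (srel sh) &&
                                        existsb (fun r => vm C (snd p) r) (srel sh)) (sedges sh)) valid_shapes.
Definition check_sedges : bool := check_sedges_C Cls.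
Definition check_isface : bool :=
  forallb (fun i => match fsh i with ShT x y z => poseq [pos x; pos y; pos z] delta | _ => true end) (seq 0 12).
Definition check_vin_C C : bool := forallb (fun i => existsb (vm C []) (Ts i)) (seq 0 12).
Definition check_von_C C : bool :=
  forallb (fun j => vm C [] (fst (erel j)) || vm C [] (snd (erel j))) (seq 0 8).

Lemma check_edges_ok : check_edges_C Cls = true. Proof. vm_compute. reflexivity. Qed.
Lemma check_distinct_ok : check_distinct = true. Proof. vm_compute. reflexivity. Qed.
Lemma check_class_ok : check_class_C Cls = true. Proof. vm_compute. reflexivity. Qed.

Lemma vIn_vs : forall x y F, vsame x y -> vIn y F -> vIn x F.
Proof. intros x y F H [z [Hz Hyz]]. exists z. split; auto. eapply vs_trans; eauto. Qed.
Lemma vIn_feq : forall x F G, vIn x F -> faceEq F G -> vIn x G.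
Proof.
  intros x F G [y [Hy Hxy]] [H1 _]. apply H1 in Hy. eapply vIn_vs; eauto.
Qed.
Lemma feq_refl : forall F, faceEq F F.
Proof. intros F; split; intros h Hh; exists h; split; auto; apply vs_refl. Qed.
Lemma feq_sym : forall F G, faceEq F G -> faceEq G F.
Proof. intros F G [H1 H2]; split; auto. Qed.
Lemma feq_trans : forall F G H, faceEq F G -> faceEq G H -> faceEq F H.
Proof.
  intros F G H H1 H2. split.
  - intros h Hh. eapply vIn_feq; [|exact H2]. apply H1; auto.
  - intros h Hh. eapply vIn_feq; [|exact (feq_sym _ _ H1)]. apply H2; auto.
Qed.
Lemma eeq_sym : forall e f, edgeEq e f -> edgeEq f e.
Proof. intros e f [[H1 H2]|[H1 H2]]; [left|right]; split; apply vs_sym; auto. Qed.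
Lemma eeq_trans : forall e f g, edgeEq e f -> edgeEq f g -> edgeEq e g.
Proof.
  intros e f g [[H1 H2]|[H1 H2]] [[H3 H4]|[H3 H4]];
  [left|right|right|left]; split; eapply vs_trans; eauto.
Qed.
Lemma eIn_eeq : forall e e' F, edgeEq e e' -> eIn e' F -> eIn e F.
Proof. intros e e' F H [f [Hf Hef]]. exists f. split; auto. eapply eeq_trans; eauto. Qed.

Lemma fv_fc : forall i w, face_vertices (fc i w) = map (fun T => w ++ T) (Ts i).
Proof.
  intros. unfold fc, Ts. rewrite fv_mk, map_map. apply map_ext. intros; rewrite app_assoc; auto.
Qed.
Lemma check_eclass_ok : check_eclass_C Cls = true. Proof. vm_compute. reflexivity. Qed.
Lemma check_sedges_ok : check_sedges_C Cls = true. Proof. vm_compute. reflexivity. Qed.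
Lemma check_isface_ok : check_isface = true. Proof. vm_compute. reflexivity. Qed.

Lemma valid_shape : forall F, isFace F -> In (shp F) valid_shapes.
Proof.
  intros [h x y z|h u v] HF; simpl in HF.
  - destruct HF as [Hx [Hy [Hz Hb]]]. unfold side in *.
    destruct Hx as [ -> | [ -> | [ -> | -> ]]]; destruct Hy as [ -> | [ -> | [ -> | -> ]]]; destruct Hz as [ -> | [ -> | [ -> | -> ]]];
    simpl; try tauto; exfalso; revert Hb; apply negcheck_beq; vm_compute; reflexivity.
  - simpl. destruct HF as [[-> ->]|[[-> ->]|[[-> ->]|[-> ->]]]]; tauto.
Qed.

Lemma feq_gen : forall sh h w (f : word -> word) i,
  (forall r, In r (srel sh) -> vsame (h ++ r) (w ++ f r)) ->
  feqb Cls (map f (srel sh)) (Ts i) = true -> faceEq (mk sh h) (fc i w).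
Proof.
  intros sh h w f i Hr Hb. unfold feqb in Hb. apply andb_prop in Hb. destruct Hb as [B1 B2].
  rewrite forallb_forall in B1, B2. split.
  - intros x Hx. rewrite fv_mk in Hx. apply in_map_iff in Hx. destruct Hx as [r [<- Hr0]].
    specialize (B1 (f r) (in_map _ _ _ Hr0)). apply existsb_exists in B1. destruct B1 as [T [HT HvT]].
    exists (w ++ T). split. rewrite fv_fc. apply in_map; auto.
    eapply vs_trans. apply Hr; auto. apply vm_ok; auto.
  - intros x Hx. rewrite fv_fc in Hx. apply in_map_iff in Hx. destruct Hx as [T [<- HT]].
    specialize (B2 T HT). apply existsb_exists in B2. destruct B2 as [R [HR HvR]].
    apply in_map_iff in HR. destruct HR as [r [<- Hr0]].
    exists (h ++ r). split. rewrite fv_mk. apply in_map; auto.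
    apply vs_sym. eapply vs_trans. apply Hr; auto. apply vm_ok; auto.
Qed.

Lemma shift_rel : forall h q w, vsame (h ++ q) w ->
  exists j, j < 4 /\ forall r, vsame (h ++ r) (w ++ rhon j (winv q ++ r)).
Proof.
  intros h q w H. destruct (vshift _ _ H) as [j [Hj Hs]]. exists j. split; auto.
  intros r. eapply vs_trans; [|apply Hs]. apply vs_beq. rewrite <- app_assoc.
  apply beq_appl. apply beq_sym.
  pose proof (beq_appr r _ _ (beq_cancel_r q)). rewrite <- app_assoc in H0. exact H0.
Qed.

Lemma in_0123 : forall j, j < 4 -> In j [0;1;2;3].
Proof. intros j Hj. destruct j as [|[|[|[|]]]]; simpl; try tauto; lia. Qed.

Lemma class_spec_gen : forall C, check_class_C C = true -> forall sh q j,
  In sh valid_shapes -> In q (srel sh) -> In j [0;1;2;3] ->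
  exists i, In i (seq 0 12) /\ feqb C (Rs sh q j) (Ts i) = true.
Proof.
  intros C H sh q j H1 H2 H3. unfold check_class_C in H.
  rewrite forallb_forall in H. specialize (H _ H1). rewrite forallb_forall in H. specialize (H q H2).
  rewrite forallb_forall in H. specialize (H j H3). apply existsb_exists in H. exact H.
Qed.
Definition class_spec := class_spec_gen Cls check_class_ok.

Lemma classify : forall w F, isFace F -> vIn w F -> exists i, i < 12 /\ faceEq F (fc i w).
Proof.
  intros w F HF Hv. pose proof (valid_shape F HF) as Hsh. rewrite (mk_shp F) in Hv |- *.
  destruct Hv as [y [Hy Hwy]]. rewrite fv_mk in Hy. apply in_map_iff in Hy. destruct Hy as [q [<- Hq]].
  destruct (shift_rel _ _ _ (vs_sym _ _ Hwy)) as [j [Hj Hr]].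
  destruct (class_spec _ q j Hsh Hq (in_0123 j Hj)) as [i [Hi Hb]]. exists i. split. apply in_seq in Hi; lia.
  eapply feq_gen; [|exact Hb]. intros r _. apply Hr.
Qed.

Lemma eeq_gen : forall e f w R0 R1 E0 E1,
  vsame (e_src e) (w ++ R0) -> vsame (e_tgt e) (w ++ R1) ->
  e_src f = w ++ E0 -> e_tgt f = w ++ E1 ->
  eeqb Cls (R0, R1) (E0, E1) = true -> edgeEq e f.
Proof.
  intros e f w R0 R1 E0 E1 H0 H1 F0 F1 Hb. unfold eeqb in Hb. simpl in Hb.
  unfold edgeEq. rewrite F0, F1. apply orb_prop in Hb. destruct Hb as [Hb|Hb]; apply andb_prop in Hb; destruct Hb as [B0 B1].
  - left; split; eapply vs_trans; eauto; apply vm_ok; auto.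
  - right; split; eapply vs_trans; eauto; apply vm_ok; auto.
Qed.

Lemma eclass_spec_gen : forall C, check_eclass_C C = true -> forall a q j,
  In a [a21; a32; a43; a41] -> In q [[]; [pos a]] -> In j [0;1;2;3] ->
  exists j', In j' (seq 0 8) /\ eeqb C (rhon j (winv q ++ []), rhon j (winv q ++ [pos a])) (erel j') = true.
Proof.
  intros C H a q j H1 H2 H3. unfold check_eclass_C in H.
  rewrite forallb_forall in H. specialize (H _ H1). rewrite forallb_forall in H. specialize (H q H2).
  rewrite forallb_forall in H. specialize (H j H3). apply existsb_exists in H. exact H.
Qed.
Definition eclass_spec := eclass_spec_gen Cls check_eclass_ok.

Lemma eclassify : forall w e, isEdge e -> vOnEdge w e -> exists j, j < 8 /\ edgeEq e (ed j w).
Proof.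
  intros w [h a] He Hv. unfold isEdge, side in He. simpl in He.
  assert (Ha : In a [a21; a32; a43; a41]) by (destruct He as [ -> | [ -> | [ -> | -> ]]]; simpl; tauto).
  assert (Hq : exists q, In q [[]; [pos a]] /\ vsame (h ++ q) w).
  { destruct Hv as [Hv|Hv]; unfold e_src, e_tgt in Hv; simpl in Hv.
    - exists []. split. simpl; tauto. rewrite app_nil_r. apply vs_sym; auto.
    - exists [pos a]. split. simpl; tauto. apply vs_sym; auto. }
  destruct Hq as [q [Hq Hhq]].
  destruct (shift_rel _ _ _ Hhq) as [j [Hj Hr]].
  destruct (eclass_spec _ _ _ Ha Hq (in_0123 j Hj)) as [j' [Hj' Hb]]. exists j'. split. apply in_seq in Hj'; lia.
  eapply eeq_gen; [| | | |exact Hb].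
  - unfold e_src; simpl. pose proof (Hr []). rewrite app_nil_r in H. exact H.
  - unfold e_tgt; simpl. apply Hr.
  - unfold ed, e_src; simpl. reflexivity.
  - unfold ed, e_tgt, erel; simpl. rewrite app_assoc. reflexivity.
Qed.

Lemma sedges_spec_gen : forall C, check_sedges_C C = true -> forall sh p,
  In sh valid_shapes -> In p (sedges sh) ->
  (exists r, In r (srel sh) /\ vm C (fst p) r = true) /\ (exists r, In r (srel sh) /\ vm C (snd p) r = true).
Proof.
  intros C H sh p H1 H2. unfold check_sedges_C in H.
  rewrite forallb_forall in H. specialize (H _ H1). rewrite forallb_forall in H. specialize (H p H2).
  apply andb_prop in H. destruct H as [A B]. apply existsb_exists in A, B. auto.
Qed.
Definition sedges_spec := sedges_spec_gen Cls check_sedges_ok.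

Lemma eIn_vIn : forall e F, isFace F -> eIn e F -> vIn (e_src e) F /\ vIn (e_tgt e) F.
Proof.
  intros e F HF [f [Hf Hef]]. pose proof (valid_shape F HF) as Hsh.
  rewrite (mk_shp F) in Hf |- *. set (sh := shp F) in *. set (h := fbase F) in *.
  assert (Hp : In (e_src f, e_tgt f) (map (fun p => (h ++ fst p, h ++ snd p)) (sedges sh))).
  { rewrite <- fe_mk. apply (in_map (fun f => (e_src f, e_tgt f))). auto. }
  apply in_map_iff in Hp. destruct Hp as [p [Ep Hp]]. inversion Ep as [[E1 E2]].
  destruct (sedges_spec _ _ Hsh Hp) as [[r1 [Hr1 B1]] [r2 [Hr2 B2]]].
  assert (V1 : vIn (e_src f) (mk sh h)).
  { exists (h ++ r1). split. rewrite fv_mk. apply in_map; auto. rewrite <- E1. apply vm_ok; auto. }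
  assert (V2 : vIn (e_tgt f) (mk sh h)).
  { exists (h ++ r2). split. rewrite fv_mk. apply in_map; auto. rewrite <- E2. apply vm_ok; auto. }
  destruct Hef as [[A B]|[A B]]; split; eapply vIn_vs; eauto.
Qed.

Lemma check_vin_ok : check_vin_C Cls = true. Proof. vm_compute. reflexivity. Qed.
Lemma check_von_ok : check_von_C Cls = true. Proof. vm_compute. reflexivity. Qed.

Lemma edges_spec_gen : forall C, check_edges_C C = true -> forall j i, j < 8 -> i < 12 ->
  (nmem i (fe j) = true -> ein_b C j i = true) /\ (nmem i (fe j) = false -> nein_b j i = true).
Proof.
  intros C H j i Hj Hi. unfold check_edges_C in H. rewrite forallb_forall in H.
  specialize (H j (proj2 (in_seq 8 0 j) (conj (Nat.le_0_l _) Hj))). rewrite forallb_forall in H.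
  specialize (H i (proj2 (in_seq 12 0 i) (conj (Nat.le_0_l _) Hi))).
  destruct (nmem i (fe j)); split; intros; auto; discriminate.
Qed.
Definition edges_spec := edges_spec_gen Cls check_edges_ok.

Lemma distinct_spec : forall a b, a < 12 -> b < 12 -> a <> b -> fneq_b a b = true.
Proof.
  intros a b Ha Hb Hab. pose proof check_distinct_ok as H. unfold check_distinct in H.
  rewrite forallb_forall in H. specialize (H a (proj2 (in_seq 12 0 a) (conj (Nat.le_0_l _) Ha))).
  rewrite forallb_forall in H. specialize (H b (proj2 (in_seq 12 0 b) (conj (Nat.le_0_l _) Hb))).
  apply orb_prop in H. destruct H as [H|H]; auto. apply Nat.eqb_eq in H. contradiction.
Qed.

Lemma vin_spec_gen : forall C, check_vin_C C = true -> forall i, i < 12 -> exists t, In t (Ts i) /\ vm C [] t = true.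
Proof.
  intros C H i Hi. unfold check_vin_C in H. rewrite forallb_forall in H.
  specialize (H i (proj2 (in_seq 12 0 i) (conj (Nat.le_0_l _) Hi))). apply existsb_exists in H. exact H.
Qed.
Definition vin_spec := vin_spec_gen Cls check_vin_ok.
Lemma von_spec_gen : forall C, check_von_C C = true -> forall j, j < 8 ->
  vm C [] (fst (erel j)) = true \/ vm C [] (snd (erel j)) = true.
Proof.
  intros C H j Hj. unfold check_von_C in H. rewrite forallb_forall in H.
  specialize (H j (proj2 (in_seq 8 0 j) (conj (Nat.le_0_l _) Hj))). apply orb_prop in H. exact H.
Qed.
Definition von_spec := von_spec_gen Cls check_von_ok.

Lemma vIn_fc : forall w i, i < 12 -> vIn w (fc i w).
Proof.
  intros w i Hi. destruct (vin_spec i Hi) as [t [Ht Hv]].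
  exists (w ++ t). split. rewrite fv_fc. apply in_map; auto.
  pose proof (vm_ok _ _ Hv w). rewrite app_nil_r in H. exact H.
Qed.

Lemma ed_src : forall j w, e_src (ed j w) = w ++ fst (erel j).
Proof. reflexivity. Qed.
Lemma ed_tgt : forall j w, e_tgt (ed j w) = w ++ snd (erel j).
Proof. intros. unfold ed, e_tgt, erel; simpl. rewrite app_assoc. reflexivity. Qed.

Lemma vOn_ed : forall w j, j < 8 -> vOnEdge w (ed j w).
Proof.
  intros w j Hj. unfold vOnEdge. rewrite ed_src, ed_tgt.
  destruct (von_spec j Hj) as [H|H]; [left|right];
  pose proof (vm_ok _ _ H w) as H'; rewrite app_nil_r in H'; exact H'.
Qed.

Lemma isEdge_ed : forall j w, isEdge (ed j w).
Proof.
  intros j w. unfold isEdge, ed, side; simpl.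
  destruct j as [|[|[|[|[|[|[|[|]]]]]]]]; simpl; tauto.
Qed.

Lemma isFace_fc : forall i w, i < 12 -> isFace (fc i w).
Proof.
  intros i w Hi. unfold fc.
  destruct i as [|[|[|[|[|[|[|[|[|[|[|[|]]]]]]]]]]]]; try lia; simpl;
  try (left; split; reflexivity); try (right; right; left; split; reflexivity);
  unfold side; repeat split; try tauto; apply poseq_ok; vm_compute; reflexivity.
Qed.

Lemma ein_ed : forall w j i, j < 8 -> i < 12 -> nmem i (fe j) = true -> eIn (ed j w) (fc i w).
Proof.
  intros w j i Hj Hi Hm. destruct (edges_spec j i Hj Hi) as [H _]. specialize (H Hm).
  unfold ein_b in H. apply existsb_exists in H. destruct H as [p [Hp Hb]].
  unfold Tedges in Hp. apply in_map_iff in Hp. destruct Hp as [p' [<- Hp']].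
  assert (Hf : In ((w ++ fb i) ++ fst p', (w ++ fb i) ++ snd p')
                  (map (fun f => (e_src f, e_tgt f)) (face_edges (fc i w)))).
  { unfold fc. rewrite fe_mk. apply (in_map (fun p => ((w ++ fb i) ++ fst p, (w ++ fb i) ++ snd p))). auto. }
  apply in_map_iff in Hf. destruct Hf as [f [Ef Hf]]. inversion Ef as [[E1 E2]].
  exists f. split; auto.
  eapply eeq_gen; [| | | |exact Hb].
  - rewrite ed_src. apply vs_refl.
  - rewrite ed_tgt. apply vs_refl.
  - rewrite E1. simpl. rewrite app_assoc. reflexivity.
  - rewrite E2. simpl. rewrite app_assoc. reflexivity.
Qed.

Lemma nein_ed : forall w j i, j < 8 -> i < 12 -> nmem i (fe j) = false ->
  ~ (vIn (e_src (ed j w)) (fc i w) /\ vIn (e_tgt (ed j w)) (fc i w)).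
Proof.
  intros w j i Hj Hi Hm [V1 V2]. destruct (edges_spec j i Hj Hi) as [_ H]. specialize (H Hm).
  unfold nein_b in H. rewrite ed_src in V1. rewrite ed_tgt in V2.
  apply orb_prop in H. destruct H as [H|H]; rewrite forallb_forall in H.
  - destruct V1 as [y [Hy Vy]]. rewrite fv_fc in Hy. apply in_map_iff in Hy. destruct Hy as [t [<- Ht]].
    exact (negcheck_ok _ _ (H t Ht) w Vy).
  - destruct V2 as [y [Hy Vy]]. rewrite fv_fc in Hy. apply in_map_iff in Hy. destruct Hy as [t [<- Ht]].
    exact (negcheck_ok _ _ (H t Ht) w Vy).
Qed.

Lemma fc_distinct : forall w a b, a < 12 -> b < 12 -> a <> b -> ~ faceEq (fc a w) (fc b w).
Proof.
  intros w a b Ha Hb Hab Hf. pose proof (distinct_spec a b Ha Hb Hab) as H.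
  unfold fneq_b in H. apply existsb_exists in H. destruct H as [t [Ht H]]. rewrite forallb_forall in H.
  assert (V : vIn (w ++ t) (fc b w)).
  { apply (vIn_feq _ (fc a w)); auto. exists (w ++ t). split. rewrite fv_fc; apply in_map; auto. apply vs_refl. }
  destruct V as [y [Hy Vy]]. rewrite fv_fc in Hy. apply in_map_iff in Hy. destruct Hy as [t' [<- Ht']].
  exact (negcheck_ok _ _ (H t' Ht') w Vy).
Qed.

Lemma fc_eq_idx : forall w a b, a < 12 -> b < 12 -> faceEq (fc a w) (fc b w) -> a = b.
Proof.
  intros w a b Ha Hb H. destruct (Nat.eq_dec a b) as [E|E]; auto. exfalso; exact (fc_distinct w a b Ha Hb E H).
Qed.

Lemma face_at_edge : forall w j F, j < 8 -> isFace F -> eIn (ed j w) F ->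
  exists i, i < 12 /\ nmem i (fe j) = true /\ faceEq F (fc i w).
Proof.
  intros w j F Hj HF He.
  destruct (eIn_vIn _ _ HF He) as [V1 V2].
  assert (Vw : vIn w F).
  { destruct (vOn_ed w j Hj) as [H|H]; eapply vIn_vs; eauto. }
  destruct (classify w F HF Vw) as [i [Hi Hfe]]. exists i. split; auto. split; auto.
  destruct (nmem i (fe j)) eqn:E; auto. exfalso. apply (nein_ed w j i Hj Hi E).
  split; eapply vIn_feq; eauto.
Qed.

Definition Sb (S : face -> Prop) (w : word) (i : nat) : bool :=
  if excluded_middle_informative (S (fc i w)) then true else false.
Lemma Sb_spec : forall S w i, Sb S w i = true <-> S (fc i w).
Proof. intros. unfold Sb. destruct (excluded_middle_informative _); split; auto; discriminate. Qed.
Lemma Sb_false : forall S w i, Sb S w i = false <-> ~ S (fc i w).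
Proof. intros. unfold Sb. destruct (excluded_middle_informative _); split; auto; try discriminate; tauto. Qed.

Lemma nmem_In : forall i l, nmem i l = true <-> In i l.
Proof.
  intros i l. unfold nmem. rewrite existsb_exists. split.
  - intros [x [Hx E]]. apply Nat.eqb_eq in E. subst; auto.
  - intros H. exists i. split; auto. apply Nat.eqb_refl.
Qed.

Lemma fe_shape : forall j, j < 8 -> exists x y z, fe j = [x; y; z] /\ x <> y /\ y <> z /\ x <> z /\
  x < 12 /\ y < 12 /\ z < 12.
Proof.
  intros j Hj. destruct j as [|[|[|[|[|[|[|[|]]]]]]]]; try lia; simpl; do 3 eexists;
  (split; [reflexivity|]); repeat split; lia.
Qed.

Definition ex2 (a b c : bool) : bool := (a && b && negb c) || (a && negb b && c) || (negb a && b && c).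

Lemma edge_two : forall S w j, HamiltonianSurface S -> j < 8 ->
  forall x y z, fe j = [x; y; z] -> ex2 (Sb S w x) (Sb S w y) (Sb S w z) = true.
Proof.
  intros S w j HS Hj x y z Efe.
  destruct HS as [[HS1 HS2] [_ [_ [H4 [H5 _]]]]].
  pose proof (isEdge_ed j w) as He.
  destruct (H5 _ He (H4 _ He)) as [F1 [F2 [S1 [S2 [E1 [E2 [N U]]]]]]].
  destruct (face_at_edge w j F1 Hj (HS1 _ S1) E1) as [i1 [Hi1 [M1 Q1]]].
  destruct (face_at_edge w j F2 Hj (HS1 _ S2) E2) as [i2 [Hi2 [M2 Q2]]].
  pose proof (HS2 F1 (fc i1 w) S1 (isFace_fc i1 w Hi1) Q1) as T1.
  pose proof (HS2 F2 (fc i2 w) S2 (isFace_fc i2 w Hi2) Q2) as T2.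
  assert (D : i1 <> i2).
  { intros ->. apply N. eapply feq_trans; eauto. apply feq_sym; auto. }
  assert (NA : ~ (S (fc x w) /\ S (fc y w) /\ S (fc z w))).
  { intros [Sx [Sy Sz]].
    destruct (fe_shape j Hj) as [x' [y' [z' [Ef [Dxy [Dyz [Dxz [Bx [By Bz]]]]]]]]].
    rewrite Efe in Ef. inversion Ef; subst x' y' z'.
    assert (Mx : nmem x (fe j) = true) by (rewrite Efe; apply nmem_In; simpl; tauto).
    assert (My : nmem y (fe j) = true) by (rewrite Efe; apply nmem_In; simpl; tauto).
    assert (Mz : nmem z (fe j) = true) by (rewrite Efe; apply nmem_In; simpl; tauto).
    pose proof (U _ Sx (ein_ed w j x Hj Bx Mx)) as Ux.
    pose proof (U _ Sy (ein_ed w j y Hj By My)) as Uy.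
    pose proof (U _ Sz (ein_ed w j z Hj Bz Mz)) as Uz.
    destruct Ux as [Ux|Ux]; destruct Uy as [Uy|Uy]; destruct Uz as [Uz|Uz];
    first [ apply (fc_distinct w x y Bx By Dxy); eapply feq_trans; [exact Ux|apply feq_sym; exact Uy]
          | apply (fc_distinct w y z By Bz Dyz); eapply feq_trans; [exact Uy|apply feq_sym; exact Uz]
          | apply (fc_distinct w x z Bx Bz Dxz); eapply feq_trans; [exact Ux|apply feq_sym; exact Uz] ]. }
  rewrite Efe in M1, M2. apply nmem_In in M1, M2. simpl in M1, M2.
  destruct M1 as [<-|[<-|[<-|[]]]]; destruct M2 as [<-|[<-|[<-|[]]]]; try (exfalso; apply D; reflexivity);
  try rewrite (proj2 (Sb_spec S w x) ltac:(assumption));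
  try rewrite (proj2 (Sb_spec S w y) ltac:(assumption));
  try rewrite (proj2 (Sb_spec S w z) ltac:(assumption));
  match goal with |- context [Sb S w ?k] => destruct (Sb S w k) eqn:Ek end; simpl; auto;
  exfalso; apply Sb_spec in Ek; apply NA; repeat split; assumption.
Qed.

Definition compok (X comp : list nat) : bool :=
  forallb (fun j => forallb (fun a => forallb (fun b =>
    nmem a X || nmem b X || Bool.eqb (nmem a comp) (nmem b comp)) (fe j)) (fe j)) (seq 0 8).

Lemma conn : forall S w X comp f g, HamiltonianSurface S -> compok X comp = true ->
  (forall i, nmem i X = true -> ~ S (fc i w)) -> f < 12 -> g < 12 ->
  nmem f comp = true -> nmem g comp = false -> S (fc f w) -> S (fc g w) -> False.
Proof.
  intros S w X comp f g HS Hok HX Hf Hg Cf Cg Sf Sg.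
  pose proof HS as HS'.
  destruct HS' as [[HS1 HS2] [_ [_ [H4 [H5 H6]]]]].
  set (P := fun A => exists i, i < 12 /\ nmem i comp = true /\ faceEq A (fc i w)).
  assert (Step : forall A B, (S A /\ S B /\ vIn w A /\ vIn w B /\
              exists e, isEdge e /\ vOnEdge w e /\ eIn e A /\ eIn e B) -> P A -> P B).
  { intros A B [SA [SB [VA [VB [e [He [Hv [EA EB]]]]]]]] [i [Hi [Ci Qi]]].
    destruct (eclassify w e He Hv) as [j [Hj Ej]].
    pose proof (eIn_eeq _ _ _ (eeq_sym _ _ Ej) EA) as EA'.
    pose proof (eIn_eeq _ _ _ (eeq_sym _ _ Ej) EB) as EB'.
    destruct (face_at_edge w j A Hj (HS1 _ SA) EA') as [ia [Hia [Ma Qa]]].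
    destruct (face_at_edge w j B Hj (HS1 _ SB) EB') as [ib [Hib [Mb Qb]]].
    assert (E : i = ia).
    { apply (fc_eq_idx w i ia Hi Hia). eapply feq_trans; [apply feq_sym; exact Qi|exact Qa]. }
    subst ia.
    assert (Xa : nmem i X = false).
    { destruct (nmem i X) eqn:E; auto. exfalso. apply (HX i E). exact (HS2 _ _ SA (isFace_fc i w Hi) Qa). }
    assert (Xb : nmem ib X = false).
    { destruct (nmem ib X) eqn:E; auto. exfalso. apply (HX ib E). exact (HS2 _ _ SB (isFace_fc ib w Hib) Qb). }
    unfold compok in Hok. rewrite forallb_forall in Hok.
    specialize (Hok j (proj2 (in_seq 8 0 j) (conj (Nat.le_0_l _) Hj))).
    rewrite forallb_forall in Hok. specialize (Hok i (proj1 (nmem_In _ _) Ma)).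
    rewrite forallb_forall in Hok. specialize (Hok ib (proj1 (nmem_In _ _) Mb)).
    rewrite Xa, Xb, Ci in Hok. simpl in Hok.
    exists ib. split; auto. split; auto. destruct (nmem ib comp); auto. }
  pose proof (H6 w (fc f w) (fc g w) Sf Sg (vIn_fc w f Hf) (vIn_fc w g Hg)) as Ch.
  assert (PF : P (fc f w)) by (exists f; split; auto; split; auto; apply feq_refl).
  assert (PG : P (fc g w)).
  { clear -Ch PF Step. induction Ch; auto. apply IHCh. eapply Step; eauto. }
  destruct PG as [i [Hi [Ci Qi]]]. apply fc_eq_idx in Qi; auto. subst. congruence.
Qed.

Definition nb (l : list bool) (i : nat) : bool := nth i l false.
Definition cons8 (l : list bool) : bool :=
  forallb (fun j => match fe j with [x; y; z] => ex2 (nb l x) (nb l y) (nb l z) | _ => false end) (seq 0 8).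
Definition bad1 (l : list bool) : bool :=
  negb (nb l 0) && negb (nb l 1) && negb (nb l 2) && negb (nb l 3) && nb l 4 && nb l 8.
Definition bad2 (l : list bool) : bool :=
  negb (nb l 5) && negb (nb l 6) && negb (nb l 9) && negb (nb l 10) && nb l 0 && nb l 1.
Definition goals (l : list bool) : bool :=
  (nb l 2 || (negb (nb l 8) && nb l 6)) && (nb l 9 || negb (nb l 4)) && (nb l 5 || negb (nb l 8)).
Definition Fc (l : list bool) : bool := negb (cons8 l && negb (bad1 l) && negb (bad2 l)) || goals l.

Fixpoint allb (n : nat) : list (list bool) :=
  match n with O => [[]] | S n => flat_map (fun l => [true :: l; false :: l]) (allb n) end.
Lemma allb_in : forall n l, length l = n -> In l (allb n).
Proof.
  induction n; intros l H. destruct l; simpl in *; try discriminate. auto.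
  destruct l as [|b l]; simpl in H; try discriminate. simpl. apply in_flat_map.
  exists l. split. apply IHn; lia. destruct b; simpl; tauto.
Qed.
Lemma comb_check : forallb Fc (allb 12) = true. Proof. vm_compute. reflexivity. Qed.
Lemma comb : forall l, length l = 12 -> Fc l = true.
Proof. intros l H. pose proof comb_check. rewrite forallb_forall in H0. apply H0, allb_in; auto. Qed.

Lemma comp1ok : compok [0;1;2;3] [4;5;6;7] = true. Proof. vm_compute. reflexivity. Qed.
Lemma comp2ok : compok [5;6;9;10] [0;11;2;4] = true. Proof. vm_compute. reflexivity. Qed.

Ltac splitb := repeat match goal with
  | H : _ && _ = true |- _ => apply andb_prop in H; destruct H
  | H : negb _ = true |- _ => apply negb_true_iff in H
  end.

Lemma link : forall S, HamiltonianSurface S -> forall w,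
  (~ S (fc 2 w) -> ~ S (fc 8 w) /\ S (fc 6 w)) /\ (~ S (fc 9 w) -> ~ S (fc 4 w)) /\
  (~ S (fc 5 w) -> ~ S (fc 8 w)).
Proof.
  intros S HS w.
  set (l := map (Sb S w) (seq 0 12)).
  assert (HF : Fc l = true) by (apply comb; reflexivity).
  assert (Hc : cons8 l = true).
  { unfold cons8, l, nb. simpl.
    rewrite (edge_two S w 0 HS ltac:(lia) _ _ _ eq_refl), (edge_two S w 1 HS ltac:(lia) _ _ _ eq_refl),
            (edge_two S w 2 HS ltac:(lia) _ _ _ eq_refl), (edge_two S w 3 HS ltac:(lia) _ _ _ eq_refl),
            (edge_two S w 4 HS ltac:(lia) _ _ _ eq_refl), (edge_two S w 5 HS ltac:(lia) _ _ _ eq_refl),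
            (edge_two S w 6 HS ltac:(lia) _ _ _ eq_refl), (edge_two S w 7 HS ltac:(lia) _ _ _ eq_refl).
    reflexivity. }
  assert (Hb1 : bad1 l = false).
  { destruct (bad1 l) eqn:E; auto. exfalso. unfold bad1, l, nb in E. simpl in E. splitb.
    apply (conn S w [0;1;2;3] [4;5;6;7] 4 8 HS comp1ok);
    [ intros i Hi; apply nmem_In in Hi; simpl in Hi; apply Sb_false;
      destruct Hi as [<-|[<-|[<-|[<-|[]]]]]; assumption
    | lia | lia | reflexivity | reflexivity | apply Sb_spec; assumption | apply Sb_spec; assumption ]. }
  assert (Hb2 : bad2 l = false).
  { destruct (bad2 l) eqn:E; auto. exfalso. unfold bad2, l, nb in E. simpl in E. splitb.
    apply (conn S w [5;6;9;10] [0;11;2;4] 0 1 HS comp2ok);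
    [ intros i Hi; apply nmem_In in Hi; simpl in Hi; apply Sb_false;
      destruct Hi as [<-|[<-|[<-|[<-|[]]]]]; assumption
    | lia | lia | reflexivity | reflexivity | apply Sb_spec; assumption | apply Sb_spec; assumption ]. }
  unfold Fc in HF. rewrite Hc, Hb1, Hb2 in HF. simpl in HF.
  unfold goals, l, nb in HF. simpl in HF. splitb.
  split; [|split].
  - intros N2. apply orb_prop in H. destruct H as [H|H]. apply Sb_false in N2. congruence.
    splitb. split; [apply Sb_false|apply Sb_spec]; auto.
  - intros N9. apply orb_prop in H1. destruct H1 as [H1|H1]. apply Sb_false in N9. congruence.
    apply negb_true_iff in H1. apply Sb_false; auto.
  - intros N5. apply orb_prop in H0. destruct H0 as [H0|H0]. apply Sb_false in N5. congruence.
    apply negb_true_iff in H0. apply Sb_false; auto.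
Qed.

Lemma feq_pref : forall sh sh' h q p,
  feqb Cls (map (fun r => q ++ r) (srel sh)) (map (fun r => p ++ r) (srel sh')) = true ->
  faceEq (mk sh (h ++ q)) (mk sh' (h ++ p)).
Proof.
  intros sh sh' h q p Hb. unfold feqb in Hb. apply andb_prop in Hb. destruct Hb as [B1 B2].
  rewrite forallb_forall in B1, B2. split.
  - intros x Hx. rewrite fv_mk in Hx. apply in_map_iff in Hx. destruct Hx as [r [<- Hr0]].
    specialize (B1 (q ++ r) (in_map (fun r => q ++ r) _ _ Hr0)). apply existsb_exists in B1.
    destruct B1 as [T [HT HvT]]. apply in_map_iff in HT. destruct HT as [t [<- Ht]].
    exists ((h ++ p) ++ t). split. rewrite fv_mk. apply (in_map (fun r => (h ++ p) ++ r)); auto.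
    rewrite <- !app_assoc. apply vm_ok; auto.
  - intros x Hx. rewrite fv_mk in Hx. apply in_map_iff in Hx. destruct Hx as [t [<- Ht]].
    specialize (B2 (p ++ t) (in_map (fun r => p ++ r) _ _ Ht)). apply existsb_exists in B2.
    destruct B2 as [R [HR HvR]]. apply in_map_iff in HR. destruct HR as [r [<- Hr]].
    exists ((h ++ q) ++ r). split. rewrite fv_mk. apply (in_map (fun r => (h ++ q) ++ r)); auto.
    rewrite <- !app_assoc. apply vs_sym. apply vm_ok; auto.
Qed.

Lemma fc_pref : forall i h u, fc i (h ++ u) = mk (fsh i) (h ++ (u ++ fb i)).
Proof. intros. unfold fc. rewrite app_assoc. reflexivity. Qed.

Lemma fc_nil : forall i h, fc i h = mk (fsh i) (h ++ ([] ++ fb i)).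
Proof. intros. reflexivity. Qed.

Definition cfeq (i : nat) (u : word) (i' : nat) (u' : word) : bool :=
  feqb Cls (map (fun r => (u ++ fb i) ++ r) (srel (fsh i))) (map (fun r => (u' ++ fb i') ++ r) (srel (fsh i'))).

Lemma fc_feq : forall h i u i' u', cfeq i u i' u' = true -> faceEq (fc i (h ++ u)) (fc i' (h ++ u')).
Proof. intros. rewrite !fc_pref. apply feq_pref. exact H. Qed.

Lemma S_feq : forall S, HamiltonianSurface S -> forall F G, isFace G -> faceEq F G -> S F -> S G.
Proof. intros S [[_ H] _] F G HG HFG HF. eapply H; eauto. Qed.

Lemma tri_to_fc2 : forall g x y z, In (ShT x y z) valid_shapes ->
  exists pre, faceEq (fc 2 (g ++ pre)) (Tri g x y z).
Proof.
  intros g x y z H.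
  assert (E : Tri g x y z = mk (ShT x y z) (g ++ [])) by (rewrite app_nil_r; reflexivity).
  rewrite E. simpl in H.
  destruct H as [H|[H|[H|[H|[H|[H|[H|[H|[]]]]]]]]]; inversion H; subst.
  - exists (delta ++ delta). rewrite fc_pref. apply feq_pref. vm_compute. reflexivity.
  - exists delta. rewrite fc_pref. apply feq_pref. vm_compute. reflexivity.
  - exists []. rewrite fc_pref. apply feq_pref. vm_compute. reflexivity.
  - exists (delta ++ delta ++ delta). rewrite fc_pref. apply feq_pref. vm_compute. reflexivity.
Qed.

Theorem mainTheorem7 :
  forall (S : face -> Prop), HamiltonianSurface S ->
  forall F : face, isFace F -> isTriangle F -> S F.
Proof.
  intros S HS F HF HT. destruct (classic (S F)) as [H|NS]; auto. exfalso.
  destruct F as [g x y z|g u v]; [|simpl in HT; contradiction].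
  pose proof (valid_shape _ HF) as Hv. simpl in Hv.
  destruct (tri_to_fc2 g x y z Hv) as [pre Hpre].
  set (w := g ++ pre).
  assert (N2 : ~ S (fc 2 w)).
  { intros H. apply NS. eapply S_feq; eauto. }
  destruct (proj1 (link S HS w) N2) as [N8 S6].
  assert (N9 : ~ S (fc 9 (w ++ [pos a41]))).
  { intros H. apply N8. eapply S_feq; eauto. apply isFace_fc; lia.
    apply feq_sym. rewrite <- (app_nil_r w) at 1. apply fc_feq. vm_compute. reflexivity. }
  pose proof (proj1 (proj2 (link S HS (w ++ [pos a41]))) N9) as N4.
  assert (N5 : ~ S (fc 5 (w ++ [pos a41; pos a43]))).
  { intros H. apply N4. eapply S_feq; eauto. apply isFace_fc; lia.
    apply fc_feq. vm_compute. reflexivity. }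
  pose proof (proj2 (proj2 (link S HS (w ++ [pos a41; pos a43]))) N5) as N8'.
  apply N8'. eapply S_feq; [exact HS| apply isFace_fc; lia | | exact S6].
  rewrite <- (app_nil_r w) at 1. apply fc_feq. vm_compute. reflexivity.
Qed.
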